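(* Let $m\in\mathbb N$ and let $f:\mathbb R\to\mathbb R$ be a $2\pi$-periodic function of class $C^m$ with zero mean, $\int_0^{2\pi} f(t)\,dt=0$. Then: (a) $\displaystyle 0\le \sum_{k=0}^{m}\mathbf c_{m,k}\int_0^{2\pi} \big(f^{(k)}(t)\big)^2\,dt$, where $\mathbf c_{m,k}$ are the coefficients of the polynomial $Q_m(t):=\prod_{j=1}^{m}(t-j^2)=\sum_{k=0}^{m}\mathbf c_{m,k}t^k$. (b) $\displaystyle 0\le \sum_{k=0}^{m-1}\lambda_{m,k}\int_0^{2\pi}\Big[\big(f^{(k+1)}(t)\big)^2-\big(f^{(k)}(t)\big)^2\Big]dt$, where $\lambda_{m,k}$ are the coefficients of the polynomial $P_m(t)=\sum_{k=0}^{m-1}\lambda_{m,k}t^k$ defined by $P_1(t)=1$ and $P_m(t):=\prod_{j=2}^{m}(t-j^2)$ for $m\ge 2$. (c) If $m\ge 2$, $$0\le \prod_{j=2}^{m}(1-j^2)\int_0^{2\pi}\big[\dot f(t)^2-f(t)^2\big]dt+\sum_{k=1}^{m-1}S_{m,k}\int_0^{2\pi}\big(f^{(k+1)}(t)+f^{(k-1)}(t)\big)^2dt,$$ where $S_{m,1},\dots,S_{m,m-1}$ are the coefficients of the polynomial $\mathcal S_m(t):=\frac{P_m(t)-P_m(1)}{t-1}=\sum_{k=1}^{m-1}S_{m,k}t^{k-1}$. The inequalities in (a), (b), (c) are equivalent, and equality holds in them if and only if $f(t)=\sum_{n=1}^{m}\big(\alpha_n\cos(nt)+\beta_n\sin(nt)\big)$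 for some real constants $\alpha_n,\beta_n$.
   Context: $f^{(k)}$ denotes the $k$-th derivative of $f$; $\dot f=f'$. *)

(* Defs.v *)
From Stdlib Require Import Reals.
From Coquelicot Require Import Coquelicot.
From mathcomp Require Import all_boot all_order all_algebra.
From mathcomp Require Import Rstruct.

Import GRing.Theory Num.Theory.

Definition Qpoly (m : nat) : {poly R} :=
  (\prod_(1 <= j < m.+1) ('X - ((j * j)%N%:R)%:P))%R.
Definition cQ (m k : nat) : R := ((Qpoly m)`_k)%R.

(** P_m(t) = prod_{j=2}^m (t - j^2)  (empty product = 1, so P_1 = 1). *)
Definition Ppoly (m : nat) : {poly R} :=
  (\prod_(2 <= j < m.+1) ('X - ((j * j)%N%:R)%:P))%R.
Definition lam (m k : nat) : R := ((Ppoly m)`_k)%R.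

(** S_m(t) = (P_m(t) - P_m(1)) / (t - 1)  (exact polynomial division). *)
Definition Spoly (m : nat) : {poly R} :=
  ((Ppoly m - ((Ppoly m).[1])%:P) %/ ('X - 1))%R.
Definition Scoef (m k : nat) : R := ((Spoly m)`_(k.-1))%R.

Definition prod_1_minus_sq (m : nat) : R :=
  (\prod_(2 <= j < m.+1) (1 - (j * j)%N%:R))%R.

Definition Cm (m : nat) (f : R -> R) : Prop :=
  (forall k x, (k < m)%nat -> ex_derive (Derive_n f k) x) /\
  (forall k x, (k <= m)%nat -> continuous (Derive_n f k) x).

Open Scope R_scope.

Definition trig_poly_1_m (m : nat) (f : R -> R) : Prop :=
  exists a b : nat -> R, forall t,
    f t = sum_n_m (fun n => a n * cos (INR n * t) + b n * sin (INR n * t)) 1 m.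

Definition quantA (m : nat) (f : R -> R) : R :=
  sum_n_m (fun k => cQ m k * RInt (fun t => (Derive_n f k t) ^ 2) 0 (2 * PI)) 0 m.

Definition quantB (m : nat) (f : R -> R) : R :=
  sum_n_m (fun k => lam m k *
    RInt (fun t => (Derive_n f (S k) t) ^ 2 - (Derive_n f k t) ^ 2) 0 (2 * PI))
    0 (m - 1).

Definition quantC (m : nat) (f : R -> R) : R :=
  prod_1_minus_sq m * RInt (fun t => (Derive f t) ^ 2 - (f t) ^ 2) 0 (2 * PI)
  + sum_n_m (fun k => Scoef m k *
      RInt (fun t => (Derive_n f (S k) t + Derive_n f (k - 1) t) ^ 2) 0 (2 * PI))
      1 (m - 1).

(* Main.v *)
Require Import Defs.
From Stdlib Require Import Reals Lra Lia ZArith.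
From Coquelicot Require Import Coquelicot.
Open Scope R_scope.

Definition cont (f : R -> R) := forall x, continuous f x.

Lemma cont_plus f g : cont f -> cont g -> cont (fun x => f x + g x).
Proof. intros Hf Hg x. apply (continuous_plus f g x); auto. Qed.
Lemma cont_mult f g : cont f -> cont g -> cont (fun x => f x * g x).
Proof. intros Hf Hg x. apply (continuous_mult f g x); auto. Qed.
Lemma cont_const c : cont (fun _ => c).
Proof. intros x. apply continuous_const. Qed.
Lemma cont_opp f : cont f -> cont (fun x => - f x).
Proof. intros Hf x. apply (continuous_opp f x); auto. Qed.
Lemma cont_minus f g : cont f -> cont g -> cont (fun x => f x - g x).
Proof. intros Hf Hg. apply cont_plus; auto. apply cont_opp; auto. Qed.
Lemma cont_scal c f : cont f -> cont (fun x => c * f x).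
Proof. intros. apply cont_mult; auto. apply cont_const. Qed.
Lemma cont_ext f g : (forall x, f x = g x) -> cont f -> cont g.
Proof. intros E Hf x. apply (continuous_ext f g x); auto. Qed.
Lemma cont_of_derive (f : R -> R) : (forall x, ex_derive f x) -> cont f.
Proof. intros H x. apply (@ex_derive_continuous R_AbsRing R_NormedModule). apply H. Qed.
Lemma cont_cos c : cont (fun x => cos (c * x)).
Proof. apply cont_of_derive. intros x. auto_derive. auto. Qed.
Lemma cont_sin c : cont (fun x => sin (c * x)).
Proof. apply cont_of_derive. intros x. auto_derive. auto. Qed.
Lemma cont_sq f : cont f -> cont (fun x => f x ^ 2).
Proof. intros. apply cont_ext with (fun x => f x * (f x * 1)). intros; ring.
  apply cont_mult; auto. apply cont_mult; auto. apply cont_const. Qed.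
Lemma cont_sum (F : nat -> R -> R) a b : (forall n, cont (F n)) ->
  cont (fun x => sum_n_m (fun n => F n x) a b).
Proof.
  intros H. destruct (le_lt_dec a b) as [Hab|Hab].
  - induction Hab.
    + apply cont_ext with (F a). intros; rewrite sum_n_n; auto. auto.
    + apply cont_ext with (fun x => sum_n_m (fun n => F n x) a m + F (S m) x).
      intros; rewrite sum_n_Sm; auto. apply cont_plus; auto.
  - apply cont_ext with (fun _ => 0). intros; rewrite sum_n_m_zero; auto.
    apply cont_const.
Qed.

Lemma cont_exRInt f a b : cont f -> ex_RInt f a b.
Proof. intros H. apply (@ex_RInt_continuous R_CompleteNormedModule). intros; apply H. Qed.

Lemma RI_plus f g a b : cont f -> cont g ->
  RInt (fun x => f x + g x) a b = RInt f a b + RInt g a b.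
Proof. intros. apply (RInt_plus f g); apply cont_exRInt; auto. Qed.
Lemma RI_minus f g a b : cont f -> cont g ->
  RInt (fun x => f x - g x) a b = RInt f a b - RInt g a b.
Proof. intros. apply (RInt_minus f g); apply cont_exRInt; auto. Qed.
Lemma RI_scal c f a b : cont f ->
  RInt (fun x => c * f x) a b = c * RInt f a b.
Proof. intros. apply (RInt_scal f a b c); apply cont_exRInt; auto. Qed.
Lemma RI_opp f a b : cont f ->
  RInt (fun x => - f x) a b = - RInt f a b.
Proof. intros. apply (RInt_opp f a b); apply cont_exRInt; auto. Qed.
Lemma RI_ext (f g : R -> R) a b : (forall x, f x = g x) -> RInt f a b = RInt g a b.
Proof. intros. apply RInt_ext; auto. Qed.
Lemma RI_const (c a b : R) : RInt (fun _ : R => c) a b = (b - a) * c :> R.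
Proof. rewrite RInt_const. reflexivity. Qed.
Lemma RI_sum (F : nat -> R -> R) p q a b : (forall n, cont (F n)) ->
  RInt (fun x => sum_n_m (fun n => F n x) p q) a b = sum_n_m (fun n => RInt (F n) a b) p q.
Proof.
  intros H. destruct (le_lt_dec p q) as [Hab|Hab].
  - induction Hab.
    + rewrite sum_n_n. apply RI_ext. intros; rewrite sum_n_n; auto.
    + rewrite sum_n_Sm; auto.
      rewrite (RI_ext _ (fun x => sum_n_m (fun n => F n x) p m + F (S m) x)).
      rewrite RI_plus; auto. rewrite IHHab. reflexivity. apply cont_sum; auto.
      intros; rewrite sum_n_Sm; auto.
  - rewrite sum_n_m_zero; auto. rewrite (RI_ext _ (fun _ => 0)). rewrite RI_const.
    simpl; unfold zero; simpl; ring. intros; rewrite sum_n_m_zero; auto.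
Qed.

Lemma RI_le f g a b : a <= b -> cont f -> cont g -> (forall x, a <= x <= b -> f x <= g x) ->
  RInt f a b <= RInt g a b.
Proof. intros. apply RInt_le; auto; try apply cont_exRInt; auto. intros; apply H2; lra. Qed.

Lemma RI_abs_le f a b M : a <= b -> cont f -> (forall x, a <= x <= b -> Rabs (f x) <= M) ->
  Rabs (RInt f a b) <= (b - a) * M.
Proof. intros. apply abs_RInt_le_const; auto. apply cont_exRInt; auto. Qed.

Lemma RI_ge0 f a b : a <= b -> cont f -> (forall x, a <= x <= b -> 0 <= f x) -> 0 <= RInt f a b.
Proof. intros. rewrite <- (Rmult_0_r (b - a)). rewrite <- RI_const. apply RI_le; auto. apply cont_const. Qed.

Lemma RI_chasles f a b c : cont f -> RInt f a b + RInt f b c = RInt f a c.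
Proof. intros. apply (RInt_Chasles f a b c); apply cont_exRInt; auto. Qed.

Lemma RI_deriv F f a b : (forall x, is_derive F x (f x)) -> cont f -> RInt f a b = F b - F a.
Proof. intros. apply is_RInt_unique. apply (is_RInt_derive F f). intros; auto. intros; auto. Qed.

Lemma RI_parts (u u' v v' : R -> R) a b : (forall x, is_derive u x (u' x)) -> (forall x, is_derive v x (v' x)) ->
  cont u' -> cont v' ->
  RInt (fun x => u' x * v x) a b = u b * v b - u a * v a - RInt (fun x => u x * v' x) a b.
Proof.
  intros Hu Hv Cu Cv.
  assert (Cu0 : cont u). { apply cont_of_derive. intros x. eexists; apply Hu. }
  assert (Cv0 : cont v). { apply cont_of_derive. intros x. eexists; apply Hv. }
  assert (E : RInt (fun x => u' x * v x + u x * v' x) a b = u b * v b - u a * v a).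
  { apply (RI_deriv (fun x => u x * v x)). intros x. apply (is_derive_mult u v); auto. intros; apply Rmult_comm.
    apply cont_plus; apply cont_mult; auto. }
  rewrite RI_plus in E; try (apply cont_mult; auto). lra.
Qed.

Lemma cont_divc f c : cont f -> cont (fun x => f x / c).
Proof. intros. unfold Rdiv. apply cont_mult; auto. apply cont_const. Qed.

Ltac cont_tac := repeat match goal with
 | |- cont (fun _ => ?c) => apply cont_const
 | |- cont (fun x => _ + _) => apply cont_plus
 | |- cont (fun x => _ - _) => apply cont_minus
 | |- cont (fun x => _ * _) => apply cont_mult
 | |- cont (fun x => _ / _) => apply cont_divc
 | |- cont (fun x => - _) => apply cont_opp
 | |- cont (fun x => _ ^ 2) => apply cont_sq
 | |- cont (fun x => cos (_ * x)) => apply cont_cos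
 | |- cont (fun x => sin (_ * x)) => apply cont_sin
 | |- cont (fun x => sum_n_m _ _ _) => apply cont_sum; intro
 | H : cont ?f |- cont _ => exact H
 | H : forall n, cont (?F n) |- cont _ => apply H
end.

Lemma sum_Sm_R (a : nat -> R) n m : (n <= S m)%nat -> sum_n_m a n (S m) = sum_n_m a n m + a (S m).
Proof. intros. rewrite sum_n_Sm; auto. Qed.
Lemma sum_zero_R (a : nat -> R) n m : (m < n)%nat -> sum_n_m a n m = 0.
Proof. intros. rewrite sum_n_m_zero; auto. Qed.
Lemma sum_plus_R (a b : nat -> R) n m : sum_n_m (fun k => a k + b k) n m = sum_n_m a n m + sum_n_m b n m.
Proof. exact (@sum_n_m_plus R_AbelianMonoid a b n m). Qed.
Lemma sum_scal_R c (a : nat -> R) n m : sum_n_m (fun k => c * a k) n m = c * sum_n_m a n m.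
Proof. exact (@sum_n_m_mult_l R_Ring c a n m). Qed.
Lemma sum_ext_R (a b : nat -> R) n m : (forall k, a k = b k) -> sum_n_m a n m = sum_n_m b n m.
Proof. intros. apply sum_n_m_ext; auto. Qed.

Lemma sin_int2PI (z : Z) : sin (IZR z * (2 * PI)) = 0.
Proof. apply sin_eq_0_1. exists (2 * z)%Z. rewrite mult_IZR. simpl. ring. Qed.
Lemma cos_int2PI (z : Z) : cos (IZR z * (2 * PI)) = 1.
Proof.
  replace (IZR z * (2 * PI)) with (2 * (IZR z * PI)) by ring.
  rewrite cos_2a_sin. rewrite sin_eq_0_1. ring. exists z; auto.
Qed.

Lemma ICz (z : Z) : RInt (fun x => cos (IZR z * x)) 0 (2 * PI) =
  (if Z.eq_dec z 0 then 2 * PI else 0) :> R.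
Proof.
  destruct (Z.eq_dec z 0) as [->|Hz].
  - rewrite (RI_ext _ (fun _ => 1)). rewrite RI_const. ring.
    intros; rewrite Rmult_0_l, cos_0; auto.
  - assert (Hz' : IZR z <> 0) by (apply not_0_IZR; auto).
    rewrite (RI_deriv (fun x => sin (IZR z * x) / IZR z)).
    rewrite sin_int2PI, Rmult_0_r, sin_0. field; auto.
    intros x. auto_derive; auto. field; auto.
    apply cont_cos.
Qed.

Lemma ISz (z : Z) : RInt (fun x => sin (IZR z * x)) 0 (2 * PI) = 0 :> R.
Proof.
  destruct (Z.eq_dec z 0) as [->|Hz].
  - rewrite (RI_ext _ (fun _ => 0)). rewrite RI_const. ring.
    intros; rewrite Rmult_0_l, sin_0; auto.
  - assert (Hz' : IZR z <> 0) by (apply not_0_IZR; auto).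
    rewrite (RI_deriv (fun x => - cos (IZR z * x) / IZR z)).
    rewrite cos_int2PI, Rmult_0_r, cos_0. field; auto.
    intros x. auto_derive; auto. field; auto.
    apply cont_sin.
Qed.

Lemma INR_sub_Z n k : INR n - INR k = IZR (Z.of_nat n - Z.of_nat k).
Proof. rewrite minus_IZR, <- !INR_IZR_INZ. auto. Qed.
Lemma INR_add_Z n k : INR n + INR k = IZR (Z.of_nat n + Z.of_nat k).
Proof. rewrite plus_IZR, <- !INR_IZR_INZ. auto. Qed.

Lemma ortho_cc n k : RInt (fun x => cos (INR n * x) * cos (INR k * x)) 0 (2 * PI) =
  (if Nat.eq_dec n k then (if Nat.eq_dec n 0 then 2 * PI else PI) else 0) :> R.
Proof.
  rewrite (RI_ext _ (fun x => /2 * cos (IZR (Z.of_nat n - Z.of_nat k) * x) + /2 * cos (IZR (Z.of_nat n + Z.of_nat k) * x))).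
  2:{ intros x. rewrite <- INR_sub_Z, <- INR_add_Z.
      replace ((INR n - INR k) * x) with (INR n * x - INR k * x) by ring.
      replace ((INR n + INR k) * x) with (INR n * x + INR k * x) by ring.
      rewrite cos_minus, cos_plus. field. }
  rewrite RI_plus, !RI_scal, !ICz; try apply cont_cos; try apply cont_scal; try apply cont_cos.
  destruct (Z.eq_dec _ 0); destruct (Z.eq_dec (Z.of_nat n + Z.of_nat k) 0);
  destruct (Nat.eq_dec n k); destruct (Nat.eq_dec n 0); try lia; lra.
Qed.

Lemma ortho_ss n k : RInt (fun x => sin (INR n * x) * sin (INR k * x)) 0 (2 * PI) =
  (if Nat.eq_dec n k then (if Nat.eq_dec n 0 then 0 else PI) else 0) :> R.
Proof.
  rewrite (RI_ext _ (fun x => /2 * cos (IZR (Z.of_nat n - Z.of_nat k) * x) + (- /2) * cos (IZR (Z.of_nat n + Z.of_nat k) * x))).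
  2:{ intros x. rewrite <- INR_sub_Z, <- INR_add_Z.
      replace ((INR n - INR k) * x) with (INR n * x - INR k * x) by ring.
      replace ((INR n + INR k) * x) with (INR n * x + INR k * x) by ring.
      rewrite cos_minus, cos_plus. field. }
  rewrite RI_plus, !RI_scal, !ICz; try apply cont_cos; try apply cont_scal; try apply cont_cos.
  destruct (Z.eq_dec _ 0); destruct (Z.eq_dec (Z.of_nat n + Z.of_nat k) 0);
  destruct (Nat.eq_dec n k); destruct (Nat.eq_dec n 0); try lia; lra.
Qed.

Lemma ortho_sc n k : RInt (fun x => sin (INR n * x) * cos (INR k * x)) 0 (2 * PI) = 0 :> R.
Proof.
  rewrite (RI_ext _ (fun x => /2 * sin (IZR (Z.of_nat n - Z.of_nat k) * x) + /2 * sin (IZR (Z.of_nat n + Z.of_nat k) * x))).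
  2:{ intros x. rewrite <- INR_sub_Z, <- INR_add_Z.
      replace ((INR n - INR k) * x) with (INR n * x - INR k * x) by ring.
      replace ((INR n + INR k) * x) with (INR n * x + INR k * x) by ring.
      rewrite sin_minus, sin_plus. field. }
  rewrite RI_plus, !RI_scal, !ISz; try apply cont_sin; try apply cont_scal; try apply cont_sin.
  ring.
Qed.

Lemma ortho_cs n k : RInt (fun x => cos (INR n * x) * sin (INR k * x)) 0 (2 * PI) = 0 :> R.
Proof. rewrite (RI_ext _ (fun x => sin (INR k * x) * cos (INR n * x))). apply ortho_sc.
  intros; ring. Qed.

Definition Ac (h : R -> R) n : R := RInt (fun t => h t * cos (INR n * t)) 0 (2 * PI).
Definition Bc (h : R -> R) n : R := RInt (fun t => h t * sin (INR n * t)) 0 (2 * PI).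
Definition TS (al be : nat -> R) N x : R :=
  sum_n_m (fun n => al n * cos (INR n * x) + be n * sin (INR n * x)) 1 N.
Definition SN h N := TS (fun n => Ac h n / PI) (fun n => Bc h n / PI) N.
Definition inr (k N : nat) : bool := (Nat.leb 1 k && Nat.leb k N)%bool.

Lemma cont_TS al be N : cont (TS al be N).
Proof. unfold TS. cont_tac. Qed.

Lemma TS_0 al be x : TS al be 0 x = 0.
Proof. unfold TS. apply sum_zero_R. lia. Qed.
Lemma TS_S al be N x : TS al be (S N) x = TS al be N x + (al (S N) * cos (INR (S N) * x) + be (S N) * sin (INR (S N) * x)).
Proof. unfold TS. apply sum_Sm_R. lia. Qed.

Lemma TS_cos al be N k : RInt (fun x => TS al be N x * cos (INR k * x)) 0 (2 * PI) =
  (if inr k N then PI * al k else 0) :> R.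
Proof.
  induction N.
  - rewrite (RI_ext _ (fun _ => 0)). rewrite RI_const. unfold inr.
    destruct (Nat.leb 1 k) eqn:E1; destruct (Nat.leb k 0) eqn:E2; simpl; try ring.
    apply Nat.leb_le in E1; apply Nat.leb_le in E2; lia.
    intros; rewrite TS_0; ring.
  - rewrite (RI_ext _ (fun x => TS al be N x * cos (INR k * x) + (al (S N) * (cos (INR (S N) * x) * cos (INR k * x)) + be (S N) * (sin (INR (S N) * x) * cos (INR k * x))))).
    2:{ intros; rewrite TS_S; ring. }
    rewrite RI_plus, IHN, RI_plus, !RI_scal, ortho_cc, ortho_sc; try (pose proof (cont_TS al be N); cont_tac).
    unfold inr.
    destruct (Nat.leb 1 k) eqn:E1; destruct (Nat.leb k N) eqn:E2; destruct (Nat.leb k (S N)) eqn:E3;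
    destruct (Nat.eq_dec (S N) k); destruct (Nat.eq_dec (S N) 0);
    try apply Nat.leb_le in E1; try apply Nat.leb_le in E2; try apply Nat.leb_le in E3;
    try apply Nat.leb_gt in E1; try apply Nat.leb_gt in E2; try apply Nat.leb_gt in E3;
    simpl; subst; try lia; try ring.
Qed.

Lemma TS_sin al be N k : RInt (fun x => TS al be N x * sin (INR k * x)) 0 (2 * PI) =
  (if inr k N then PI * be k else 0) :> R.
Proof.
  induction N.
  - rewrite (RI_ext _ (fun _ => 0)). rewrite RI_const. unfold inr.
    destruct (Nat.leb 1 k) eqn:E1; destruct (Nat.leb k 0) eqn:E2; simpl; try ring.
    apply Nat.leb_le in E1; apply Nat.leb_le in E2; lia.
    intros; rewrite TS_0; ring.
  - rewrite (RI_ext _ (fun x => TS al be N x * sin (INR k * x) + (al (S N) * (cos (INR (S N) * x) * sin (INR k * x)) + be (S N) * (sin (INR (S N) * x) * sin (INR k * x))))).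
    2:{ intros; rewrite TS_S; ring. }
    rewrite RI_plus, IHN, RI_plus, !RI_scal, ortho_ss, ortho_cs; try (pose proof (cont_TS al be N); cont_tac).
    unfold inr.
    destruct (Nat.leb 1 k) eqn:E1; destruct (Nat.leb k N) eqn:E2; destruct (Nat.leb k (S N)) eqn:E3;
    destruct (Nat.eq_dec (S N) k); destruct (Nat.eq_dec (S N) 0);
    try apply Nat.leb_le in E1; try apply Nat.leb_le in E2; try apply Nat.leb_le in E3;
    try apply Nat.leb_gt in E1; try apply Nat.leb_gt in E2; try apply Nat.leb_gt in E3;
    simpl; subst; try lia; try ring.
Qed.

Lemma TS_mean al be N : RInt (fun x => TS al be N x) 0 (2 * PI) = 0 :> R.
Proof.
  rewrite (RI_ext _ (fun x => TS al be N x * cos (INR 0 * x))).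
  rewrite TS_cos. reflexivity.
  intros; simpl; rewrite Rmult_0_l, cos_0; ring.
Qed.

Definition wn h n : R := Ac h n ^ 2 + Bc h n ^ 2.

Lemma bessel_id h N : cont h ->
  RInt (fun x => (h x - SN h N x) ^ 2) 0 (2 * PI) =
  RInt (fun x => h x ^ 2) 0 (2 * PI) - sum_n_m (wn h) 1 N / PI :> R.
Proof.
  intros Ch. pose proof PI_RGT_0 as Hpi.
  induction N.
  - rewrite sum_zero_R by lia. unfold Rdiv; rewrite Rmult_0_l, Rminus_0_r. apply RI_ext. intros x. unfold SN. rewrite TS_0. ring.
  - rewrite sum_Sm_R by lia.
    set (A := Ac h (S N)). set (B := Bc h (S N)).
    assert (CS : cont (SN h N)) by apply cont_TS.
    rewrite (RI_ext _ (fun x => (h x - SN h N x) ^ 2 + ((-2 * A / PI) * (h x * cos (INR (S N) * x)) + (-2 * B / PI) * (h x * sin (INR (S N) * x))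
       + ((2 * A / PI) * (SN h N x * cos (INR (S N) * x)) + (2 * B / PI) * (SN h N x * sin (INR (S N) * x)))
       + ((A / PI) ^ 2 * (cos (INR (S N) * x) * cos (INR (S N) * x)) + (2 * A * B / PI ^ 2) * (sin (INR (S N) * x) * cos (INR (S N) * x))
          + (B / PI) ^ 2 * (sin (INR (S N) * x) * sin (INR (S N) * x)))))).
    2:{ intros x. replace (SN h (S N) x) with (SN h N x + (A / PI * cos (INR (S N) * x) + B / PI * sin (INR (S N) * x))) by (unfold SN; rewrite TS_S; reflexivity). field. lra. }
    rewrite RI_plus, IHN; try cont_tac.
    rewrite !RI_plus, !RI_scal; try cont_tac.
    unfold SN at 1 2. rewrite TS_cos, TS_sin, ortho_cc, ortho_ss, ortho_sc.
    fold (Ac h (S N)) (Bc h (S N)). fold A B.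
    unfold inr. replace (Nat.leb (S N) N) with false by (symmetry; apply Nat.leb_gt; lia).
    rewrite Bool.andb_false_r.
    destruct (Nat.eq_dec (S N) (S N)); [|lia]. destruct (Nat.eq_dec (S N) 0); [lia|].
    unfold wn. fold A B. field. lra.
Qed.

Inductive TP : (R -> R) -> Prop :=
| TP_cos : forall k, TP (fun x => cos (INR k * x))
| TP_sin : forall k, TP (fun x => sin (INR k * x))
| TP_plus : forall f g, TP f -> TP g -> TP (fun x => f x + g x)
| TP_scal : forall c f, TP f -> TP (fun x => c * f x)
| TP_ext : forall f g, TP f -> (forall x, f x = g x) -> TP g.

Lemma TP_cont f : TP f -> cont f.
Proof.
  induction 1.
  - apply cont_cos. - apply cont_sin. - apply cont_plus; auto. - apply cont_scal; auto.
  - apply cont_ext with f; auto.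
Qed.

Lemma TP_orth psi : cont psi -> (forall k, Ac psi k = 0) -> (forall k, Bc psi k = 0) ->
  forall T, TP T -> RInt (fun x => psi x * T x) 0 (2 * PI) = 0 :> R.
Proof.
  intros Cp HA HB T HT. induction HT.
  - apply HA. - apply HB.
  - rewrite (RI_ext _ (fun x => psi x * f x + psi x * g x)) by (intros; ring).
    rewrite RI_plus, IHHT1, IHHT2. ring. apply cont_mult; auto; apply TP_cont; auto.
    apply cont_mult; auto; apply TP_cont; auto.
  - rewrite (RI_ext _ (fun x => c * (psi x * f x))) by (intros; ring).
    rewrite RI_scal, IHHT. ring. apply cont_mult; auto; apply TP_cont; auto.
  - rewrite (RI_ext _ (fun x => psi x * f x)). auto. intros; rewrite H; auto.
Qed.

Lemma TP_zero : TP (fun _ => 0).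
Proof. apply TP_ext with (fun x => 0 * cos (INR 0 * x)). apply TP_scal, TP_cos. intros; ring. Qed.
Lemma TP_one : TP (fun _ => 1).
Proof. apply TP_ext with (fun x => cos (INR 0 * x)). apply TP_cos. intros; simpl; rewrite Rmult_0_l, cos_0; auto. Qed.

Lemma TP_mcos f : TP f -> TP (fun x => f x * cos x).
Proof.
  induction 1.
  - destruct k as [|k].
    + apply TP_ext with (fun x => cos (INR 1 * x)). apply TP_cos.
      intros; simpl; rewrite Rmult_0_l, cos_0, !Rmult_1_l; auto.
    + apply TP_ext with (fun x => /2 * cos (INR (S (S k)) * x) + /2 * cos (INR k * x)).
      apply TP_plus; apply TP_scal; apply TP_cos.
      intros x. rewrite !S_INR.
      replace ((INR k + 1 + 1) * x) with ((INR k + 1) * x + x) by ring.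
      replace (INR k * x) with ((INR k + 1) * x - x) by ring.
      rewrite cos_plus, cos_minus. field.
  - destruct k as [|k].
    + apply TP_ext with (fun _ => 0). apply TP_zero.
      intros; simpl; rewrite Rmult_0_l, sin_0; ring.
    + apply TP_ext with (fun x => /2 * sin (INR (S (S k)) * x) + /2 * sin (INR k * x)).
      apply TP_plus; apply TP_scal; apply TP_sin.
      intros x. rewrite !S_INR.
      replace ((INR k + 1 + 1) * x) with ((INR k + 1) * x + x) by ring.
      replace (INR k * x) with ((INR k + 1) * x - x) by ring.
      rewrite sin_plus, sin_minus. field.
  - apply TP_ext with (fun x => f x * cos x + g x * cos x). apply TP_plus; auto. intros; ring.
  - apply TP_ext with (fun x => c * (f x * cos x)). apply TP_scal; auto. intros; ring.
  - apply TP_ext with (fun x => f x * cos x). auto. intros; rewrite H0; auto.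
Qed.

Lemma TP_msin f : TP f -> TP (fun x => f x * sin x).
Proof.
  induction 1.
  - destruct k as [|k].
    + apply TP_ext with (fun x => sin (INR 1 * x)). apply TP_sin.
      intros; simpl; rewrite Rmult_0_l, cos_0, !Rmult_1_l; auto.
    + apply TP_ext with (fun x => /2 * sin (INR (S (S k)) * x) + (-/2) * sin (INR k * x)).
      apply TP_plus; apply TP_scal; apply TP_sin.
      intros x. rewrite !S_INR.
      replace ((INR k + 1 + 1) * x) with ((INR k + 1) * x + x) by ring.
      replace (INR k * x) with ((INR k + 1) * x - x) by ring.
      rewrite sin_plus, sin_minus. field.
  - destruct k as [|k].
    + apply TP_ext with (fun _ => 0). apply TP_zero.
      intros; simpl; rewrite Rmult_0_l, sin_0; ring.
    + apply TP_ext with (fun x => (-/2) * cos (INR (S (S k)) * x) + /2 * cos (INR k * x)).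
      apply TP_plus; apply TP_scal; apply TP_cos.
      intros x. rewrite !S_INR.
      replace ((INR k + 1 + 1) * x) with ((INR k + 1) * x + x) by ring.
      replace (INR k * x) with ((INR k + 1) * x - x) by ring.
      rewrite cos_plus, cos_minus. field.
  - apply TP_ext with (fun x => f x * sin x + g x * sin x). apply TP_plus; auto. intros; ring.
  - apply TP_ext with (fun x => c * (f x * sin x)). apply TP_scal; auto. intros; ring.
  - apply TP_ext with (fun x => f x * sin x). auto. intros; rewrite H0; auto.
Qed.

Lemma TP_kernel e x0 N : TP (fun x => (e + cos (x - x0)) ^ N).
Proof.
  induction N.
  - apply TP_ext with (fun _ => 1). apply TP_one. intros; simpl; auto.
  - apply TP_ext with (fun x => e * (e + cos (x - x0)) ^ N + (cos x0 * ((e + cos (x - x0)) ^ N * cos x) + sin x0 * ((e + cos (x - x0)) ^ N * sin x))).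
    apply TP_plus. apply TP_scal; auto. apply TP_plus; apply TP_scal. apply TP_mcos; auto. apply TP_msin; auto.
    intros x. simpl. rewrite cos_minus. ring.
Qed.

Lemma cont_eps f x eps : cont f -> 0 < eps -> exists d, 0 < d /\ forall y, Rabs (y - x) < d -> Rabs (f y - f x) < eps.
Proof.
  intros Cf He. assert (H : continuity_pt f x) by (apply continuity_pt_filterlim; apply Cf).
  destruct (H eps He) as [d [Hd Hd']]. exists d; split; auto.
  intros y Hy. destruct (Req_dec y x) as [->|Hne].
  - rewrite Rminus_diag, Rabs_R0; auto.
  - apply (Hd' y). split; auto. split; auto. constructor. 
Qed.

Lemma cont_bound f a b : a <= b -> cont f -> exists M, 0 <= M /\ forall y, a <= y <= b -> Rabs (f y) <= M.
Proof.
  intros Hab Cf.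
  destruct (continuity_ab_maj (fun y => Rabs (f y)) a b Hab) as [Mx [HM _]].
  - intros c _. apply continuity_pt_filterlim. apply (continuous_Rabs_comp f). apply Cf.
  - exists (Rabs (f Mx)). split. apply Rabs_pos. auto.
Qed.

Lemma Rabs_le_inv' a b : Rabs a <= b -> - b <= a <= b.
Proof. unfold Rabs; destruct (Rcase_abs a); intros; lra. Qed.

Lemma cos_abs y : cos y = cos (Rabs y).
Proof. destruct (Rcase_abs y). rewrite Rabs_left, cos_neg; auto. rewrite Rabs_right; auto. Qed.

Lemma cos_near d y : 0 <= d <= PI -> Rabs y <= d -> cos d <= cos y.
Proof. intros Hd Hy. rewrite (cos_abs y). pose proof (Rabs_pos y). apply cos_decr_1; lra. Qed.

Lemma cos_far d y : 0 <= d <= PI -> d <= Rabs y <= 2 * PI - d -> cos y <= cos d.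
Proof.
  intros Hd Hy. rewrite (cos_abs y). pose proof (Rabs_pos y). destruct (Rle_dec (Rabs y) PI).
  - apply cos_decr_1; lra.
  - replace (cos (Rabs y)) with (cos (2 * PI - Rabs y)).
    apply cos_decr_1; lra.
    rewrite cos_minus, cos_2PI, sin_2PI. ring.
Qed.

Lemma core psi x0 : cont psi -> (forall T, TP T -> RInt (fun x => psi x * T x) 0 (2 * PI) = 0 :> R) ->
  0 < x0 < 2 * PI -> 0 < psi x0 -> False.
Proof.
  intros Cp Horth Hx0 Hp. pose proof PI_RGT_0 as Hpi. pose proof PI2_1 as Hpi2.
  set (c := psi x0 / 2).
  assert (Hc : 0 < c) by (unfold c; lra).
  destruct (cont_eps psi x0 c Cp Hc) as [d1 [Hd1 Hd1']].
  set (d := Rmin (Rmin d1 x0) (Rmin (2 * PI - x0) 1) / 2).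
  assert (Hd : 0 < d /\ d < d1 /\ d < x0 /\ d < 2 * PI - x0 /\ d < 1).
  { assert (H1 := Rmin_l (Rmin d1 x0) (Rmin (2 * PI - x0) 1)).
    assert (H2 := Rmin_r (Rmin d1 x0) (Rmin (2 * PI - x0) 1)).
    assert (H3 := Rmin_l d1 x0). assert (H4 := Rmin_r d1 x0).
    assert (H5 := Rmin_l (2 * PI - x0) 1). assert (H6 := Rmin_r (2 * PI - x0) 1).
    assert (H7 : 0 < Rmin (Rmin d1 x0) (Rmin (2 * PI - x0) 1)).
    { apply Rmin_glb_lt; apply Rmin_glb_lt; lra. }
    unfold d. repeat split; lra. }
  destruct Hd as [Hd0 [Hdd1 [Hdx0 [Hdx1 Hdlt1]]]].

  assert (Hnear : forall y, Rabs (y - x0) <= d -> c <= psi y).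
  { intros y Hy. assert (Rabs (psi y - psi x0) < c) by (apply Hd1'; lra).
    apply Rabs_def2 in H. unfold c in *. lra. }
  destruct (cont_bound psi 0 (2 * PI)) as [M [HM0 HM]]; [lra|auto|].
  set (e := (1 - cos d) / 2). set (q := (1 + cos d) / 2). set (r := e + cos (d / 2)).
  assert (Hcd1 : cos d < 1). { rewrite <- cos_0. apply cos_decreasing_1; lra. }
  pose proof (COS_bound d) as Hcb.
  assert (He : 0 < e) by (unfold e; lra).
  assert (Hq : 0 <= q <= 1) by (unfold q; lra).
  assert (Hr : 1 < r).
  { unfold r, e. replace d with (2 * (d / 2)) at 1 by field. rewrite cos_2a_cos.
    assert (0 < cos (d / 2)) by (apply cos_gt_0; lra).
    assert (cos (d / 2) < 1). { rewrite <- cos_0. apply cos_decreasing_1; lra. }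
    nra. }
  set (K := fun N y => (e + cos (y - x0)) ^ N).
  assert (CK : forall N, cont (fun y => psi y * K N y)).
  { intros N. apply cont_mult; auto. apply TP_cont. apply TP_kernel. }
  assert (Hlow : forall N y, 0 <= y <= 2 * PI -> - (M * q ^ N) <= psi y * K N y).
  { intros N y Hy. unfold K. destruct (Rle_dec (Rabs (y - x0)) d).
    - assert (cos d <= cos (y - x0)) by (apply cos_near; lra).
      assert (0 <= psi y) by (pose proof (Hnear y r0); lra).
      assert (0 <= (e + cos (y - x0)) ^ N) by (apply pow_le; unfold e; lra).
      assert (0 <= M * q ^ N) by (apply Rmult_le_pos; auto; apply pow_le; lra).
      nra.
    - assert (cos (y - x0) <= cos d).
      { apply cos_far. lra. split. lra. apply Rabs_le. lra. }
      assert (Rabs (e + cos (y - x0)) <= q).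
      { pose proof (COS_bound (y - x0)). apply Rabs_le. unfold e, q in *. lra. }
      assert (Rabs (psi y * (e + cos (y - x0)) ^ N) <= M * q ^ N).
      { rewrite Rabs_mult, <- RPow_abs. apply Rmult_le_compat; auto using Rabs_pos.
        apply pow_le, Rabs_pos. apply pow_incr. split; auto using Rabs_pos. }
      apply Rabs_le_inv' in H1. lra. }
  assert (Hmid : forall N y, Rabs (y - x0) <= d / 2 -> c * r ^ N <= psi y * K N y).
  { intros N y Hy. unfold K.
    assert (cos (d / 2) <= cos (y - x0)) by (apply cos_near; lra).
    apply Rmult_le_compat. lra. apply pow_le; lra. apply Hnear; lra.
    apply pow_incr. unfold r in *. split; lra. }
  assert (Hint : forall N, d * c * r ^ N <= 2 * PI * M).
  { intros N.
    assert (E := Horth (K N) (TP_kernel e x0 N)).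
    rewrite <- (RI_chasles _ 0 (x0 - d / 2) (2 * PI)) in E by auto.
    rewrite <- (RI_chasles _ (x0 - d / 2) (x0 + d / 2) (2 * PI)) in E by auto.
    assert (I1 : (x0 - d / 2 - 0) * (- (M * q ^ N)) <= RInt (fun y => psi y * K N y) 0 (x0 - d / 2)).
    { rewrite <- RI_const. apply RI_le; [lra|apply cont_const|auto|]. intros; apply Hlow; lra. }
    assert (I2 : (x0 + d / 2 - (x0 - d / 2)) * (c * r ^ N) <= RInt (fun y => psi y * K N y) (x0 - d / 2) (x0 + d / 2)).
    { rewrite <- RI_const. apply RI_le; [lra|apply cont_const|auto|]. intros; apply Hmid. apply Rabs_le; lra. }
    assert (I3 : (2 * PI - (x0 + d / 2)) * (- (M * q ^ N)) <= RInt (fun y => psi y * K N y) (x0 + d / 2) (2 * PI)).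
    { rewrite <- RI_const. apply RI_le; [lra|apply cont_const|auto|]. intros; apply Hlow; lra. }
    assert (q ^ N <= 1). { rewrite <- (pow1 N). apply pow_incr; lra. }
    assert (0 <= q ^ N) by (apply pow_le; lra).
    assert (M * q ^ N <= M) by nra.
    nra. }
  destruct (INR_unbounded (2 * PI * M / (d * c * (r - 1)))) as [N HN].
  specialize (Hint N).
  assert (HB := Rle_pow_lin (r - 1) N). replace (1 + (r - 1)) with r in HB by ring.
  assert (0 < d * c * (r - 1)) by (apply Rmult_lt_0_compat; [apply Rmult_lt_0_compat|]; lra).
  assert (INR N * (d * c * (r - 1)) > 2 * PI * M).
  { replace (2 * PI * M) with (2 * PI * M / (d * c * (r - 1)) * (d * c * (r - 1))) by (field; lra).
    apply Rmult_gt_compat_r; lra. }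
  assert (d * c * (1 + INR N * (r - 1)) <= d * c * r ^ N).
  { apply Rmult_le_compat_l. nra. apply HB. lra. }
  nra.
Qed.

Lemma interior_zero psi : cont psi -> (forall y, 0 < y < 2 * PI -> psi y = 0) ->
  forall x, 0 <= x <= 2 * PI -> psi x = 0.
Proof.
  intros Cp H x Hx. pose proof PI_RGT_0. pose proof PI2_1.
  destruct (Req_dec (psi x) 0) as [E|Hne]; auto. exfalso.
  assert (He : 0 < Rabs (psi x)) by (apply Rabs_pos_lt; auto).
  destruct (cont_eps psi x _ Cp He) as [d [Hd Hd']].
  set (s := Rmin (d / 2) 1).
  assert (0 < s /\ s < d /\ s <= 1).
  { unfold s. pose proof (Rmin_l (d/2) 1). pose proof (Rmin_r (d/2) 1).
    assert (0 < Rmin (d/2) 1) by (apply Rmin_glb_lt; lra). repeat split; lra. }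
  destruct (Rle_dec x PI).
  - specialize (Hd' (x + s)). rewrite H in Hd'. 2: lra.
    rewrite Rminus_0_l, Rabs_Ropp in Hd'. apply (Rlt_irrefl (Rabs (psi x))). apply Hd'.
    rewrite Rabs_right; lra.
  - specialize (Hd' (x - s)). rewrite H in Hd'. 2: lra.
    rewrite Rminus_0_l, Rabs_Ropp in Hd'. apply (Rlt_irrefl (Rabs (psi x))). apply Hd'.
    rewrite Rabs_left; lra.
Qed.

Lemma uniq psi : cont psi -> (forall k, Ac psi k = 0) -> (forall k, Bc psi k = 0) ->
  forall x, 0 <= x <= 2 * PI -> psi x = 0.
Proof.
  intros Cp HA HB. apply interior_zero; auto.
  intros y Hy. pose proof (TP_orth psi Cp HA HB) as Ho.
  destruct (Rtotal_order (psi y) 0) as [Hl|[E|Hg]]; auto; exfalso.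
  - apply (core (fun x => - psi x) y). apply cont_opp; auto.
    intros T HT. rewrite (RI_ext _ (fun x => - (psi x * T x))) by (intros; ring).
    rewrite RI_opp, Ho; auto. ring. apply cont_mult; auto. apply TP_cont; auto.
    auto. lra.
  - apply (core psi y); auto.
Qed.

Lemma cos_nat2PI n : cos (INR n * (2 * PI)) = 1.
Proof. rewrite INR_IZR_INZ. apply cos_int2PI. Qed.
Lemma sin_nat2PI n : sin (INR n * (2 * PI)) = 0.
Proof. rewrite INR_IZR_INZ. apply sin_int2PI. Qed.

Lemma deriv_coef (phi phi' : R -> R) : (forall x, is_derive phi x (phi' x)) -> cont phi' -> phi (2 * PI) = phi 0 ->
  forall n, Ac phi' n = INR n * Bc phi n /\ Bc phi' n = - INR n * Ac phi n.
Proof.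
  intros Hd Cd Hp n. unfold Ac, Bc. split.
  - rewrite (RI_parts phi phi' (fun x => cos (INR n * x)) (fun x => - INR n * sin (INR n * x))); auto.
    rewrite (RI_ext (fun x => phi x * (- INR n * sin (INR n * x))) (fun x => (- INR n) * (phi x * sin (INR n * x)))) by (intros; ring).
    rewrite RI_scal. rewrite cos_nat2PI, (Rmult_0_r (INR n)), cos_0, Hp. ring.
    apply cont_mult. apply cont_of_derive; intros x; eexists; apply Hd. apply cont_sin.
    intros x; auto_derive; auto; ring.
    cont_tac.
  - rewrite (RI_parts phi phi' (fun x => sin (INR n * x)) (fun x => INR n * cos (INR n * x))); auto.
    rewrite (RI_ext (fun x => phi x * (INR n * cos (INR n * x))) (fun x => (INR n) * (phi x * cos (INR n * x)))) by (intros; ring).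
    rewrite RI_scal. rewrite sin_nat2PI, (Rmult_0_r (INR n)), sin_0. ring.
    apply cont_mult. apply cont_of_derive; intros x; eexists; apply Hd. apply cont_cos.
    intros x; auto_derive; auto; ring.
    cont_tac.
Qed.

Lemma bessel h N : cont h -> sum_n_m (wn h) 1 N <= PI * RInt (fun x => h x ^ 2) 0 (2 * PI).
Proof.
  intros Ch. pose proof PI_RGT_0.
  assert (0 <= RInt (fun x => (h x - SN h N x) ^ 2) 0 (2 * PI)).
  { apply RI_ge0. lra. pose proof (cont_TS (fun n => Ac h n / PI) (fun n => Bc h n / PI) N). fold (SN h N) in H0. cont_tac.
    intros; apply pow2_ge_0. }
  rewrite bessel_id in H0; auto.
  set (I := RInt (fun x => h x ^ 2) 0 (2 * PI)) in *. set (S := sum_n_m (wn h) 1 N) in *.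
  replace S with (PI * (S / PI)) by (field; lra). apply Rmult_le_compat_l; lra.
Qed.

Lemma inv_sq_tail M N : (1 <= M)%nat -> (M <= N)%nat ->
  sum_n_m (fun n => / (INR n ^ 2)) (S M) N <= / INR M - / INR N.
Proof.
  intros HM HMN. induction HMN.
  - rewrite sum_zero_R by lia. lra.
  - rewrite sum_Sm_R by lia.
    assert (1 <= INR m) by (apply (le_INR 1); lia).
    rewrite S_INR.
    assert (/ (INR m + 1) ^ 2 <= / INR m - / (INR m + 1)).
    { replace (/ INR m - / (INR m + 1)) with (/ (INR m * (INR m + 1))) by (field; lra).
      apply Rinv_le_contravar. nra. nra. }
    lra.
Qed.

Lemma abs_amgm A n : (1 <= n)%nat -> Rabs A <= / (INR n ^ 2) / 2 + INR n ^ 2 * A ^ 2 / 2.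
Proof.
  intros Hn. assert (1 <= INR n) by (apply (le_INR 1); lia).
  assert (0 <= (/ INR n - INR n * Rabs A) ^ 2) by apply pow2_ge_0.
  replace (A ^ 2) with (Rabs A ^ 2) by (unfold Rabs; destruct Rcase_abs; ring).
  assert (/ INR n * INR n = 1) by (field; lra).
  replace ((/ INR n - INR n * Rabs A) ^ 2) with (/ INR n ^ 2 - 2 * Rabs A + INR n ^ 2 * Rabs A ^ 2) in H0
    by (field; lra).
  replace (/ (INR n ^ 2)) with (/ INR n ^ 2) by (field; lra). lra.
Qed.

Lemma Rpm (a b : R) : a + b - a = b.
Proof. ring. Qed.

Lemma coef_tail (A B : nat -> R) K :
  (forall N, sum_n_m (fun n => INR n ^ 2 * (A n ^ 2 + B n ^ 2)) 1 N <= K) ->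
  forall eps, 0 < eps -> exists M0, (1 <= M0)%nat /\ forall M N, (M0 <= M)%nat -> (M <= N)%nat ->
    sum_n_m (fun n => Rabs (A n) + Rabs (B n)) (S M) N <= eps.
Proof.
  intros HK eps Heps.
  set (P := fun N => (sum_n_m (fun n => INR n ^ 2 * (A n ^ 2 + B n ^ 2)) 1 N : R)).
  assert (Hinc : forall N, P N <= P (S N)).
  { intros N. unfold P. rewrite sum_Sm_R by lia. pose proof (pow2_ge_0 (INR (S N))).
    pose proof (pow2_ge_0 (A (S N))). pose proof (pow2_ge_0 (B (S N))). nra. }
  assert (Hc : ex_lim_seq_cauchy P).
  { apply ex_lim_seq_cauchy_corr. apply ex_finite_lim_seq_incr with K; auto. }
  destruct (Hc (mkposreal (eps / 2) ltac:(lra))) as [N1 HN1]. simpl in HN1.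
  destruct (INR_unbounded (2 / eps)) as [N2 HN2].
  exists (S (N1 + N2)). split. lia. intros M N HM HMN.
  assert (Hsplit : sum_n_m (fun n => Rabs (A n) + Rabs (B n)) (S M) N <=
     sum_n_m (fun n => / (INR n ^ 2)) (S M) N + / 2 * (P N - P M)).
  { assert (Hch : P N = P M + sum_n_m (fun n : nat => INR n ^ 2 * (A n ^ 2 + B n ^ 2)) (S M) N :> R).
    { unfold P. rewrite (sum_n_m_Chasles _ 1 M N) by lia. reflexivity. }
    rewrite Hch, Rpm.
    rewrite <- sum_scal_R, <- sum_plus_R.
    destruct (le_lt_dec (S M) N) as [HSM|HSM].
    2:{ rewrite !sum_zero_R by lia. lra. }
    (* termwise bound valid for n >= 1 only *)
    clear -HSM HM.
    assert (Gen : forall p, (1 <= p)%nat -> forall q, sum_n_m (fun n => Rabs (A n) + Rabs (B n)) p q <=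
       sum_n_m (fun n => / (INR n ^ 2) + / 2 * (INR n ^ 2 * (A n ^ 2 + B n ^ 2))) p q).
    { intros p Hp q. destruct (le_lt_dec p q) as [Hpq|Hpq].
      - induction Hpq.
        + rewrite !sum_n_n. pose proof (abs_amgm (A p) p Hp). pose proof (abs_amgm (B p) p Hp). lra.
        + rewrite !sum_Sm_R by lia. pose proof (abs_amgm (A (S m)) (S m)). pose proof (abs_amgm (B (S m)) (S m)).
          assert (1 <= S m)%nat by lia. specialize (H H1). specialize (H0 H1). lra.
      - rewrite !sum_zero_R by lia. lra. }
    apply Gen. lia. }
  assert (HP : P N - P M <= eps / 2).
  { specialize (HN1 N M). assert (Rabs (P N - P M) < eps / 2) by (apply HN1; lia).
    apply Rabs_def2 in H. lra. }
  assert (HI : sum_n_m (fun n => / (INR n ^ 2)) (S M) N <= eps / 2).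
  { assert (Hm1 : (1 <= M)%nat) by lia. pose proof (inv_sq_tail M N Hm1 HMN).
    assert (0 < INR N) by (apply lt_0_INR; lia).
    assert (INR N2 <= INR M) by (apply le_INR; lia).
    assert (2 / eps < INR M) by lra.
    assert (/ INR M <= eps / 2).
    { replace (eps / 2) with (/ (2 / eps)) by (field; lra). apply Rinv_le_contravar.
      apply Rdiv_lt_0_compat; lra. lra. }
    pose proof (Rinv_0_lt_compat _ H0). lra. }
  lra.
Qed.

Lemma TS_diff al be M N x : (M <= N)%nat ->
  Rabs (TS al be N x - TS al be M x) <= sum_n_m (fun n => Rabs (al n) + Rabs (be n)) (S M) N.
Proof.
  intros H. induction H.
  - rewrite Rminus_diag, Rabs_R0, sum_zero_R by lia. lra.
  - rewrite TS_S, sum_Sm_R by lia.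
    replace (TS al be m x + (al (S m) * cos (INR (S m) * x) + be (S m) * sin (INR (S m) * x)) - TS al be M x)
      with ((TS al be m x - TS al be M x) + (al (S m) * cos (INR (S m) * x) + be (S m) * sin (INR (S m) * x))) by ring.
    eapply Rle_trans. apply Rabs_triang. apply Rplus_le_compat; auto.
    eapply Rle_trans. apply Rabs_triang. rewrite !Rabs_mult.
    pose proof (COS_bound (INR (S m) * x)). pose proof (SIN_bound (INR (S m) * x)).
    assert (Rabs (cos (INR (S m) * x)) <= 1) by (apply Rabs_le; lra).
    assert (Rabs (sin (INR (S m) * x)) <= 1) by (apply Rabs_le; lra).
    pose proof (Rabs_pos (al (S m))). pose proof (Rabs_pos (be (S m))).
    pose proof (Rabs_pos (cos (INR (S m) * x))). pose proof (Rabs_pos (sin (INR (S m) * x))).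
    nra.
Qed.

Lemma cont_of_eps f : (forall x eps, 0 < eps -> exists d, 0 < d /\ forall y, Rabs (y - x) < d -> Rabs (f y - f x) < eps) -> cont f.
Proof.
  intros H x. apply continuity_pt_filterlim. intros eps Heps.
  destruct (H x eps Heps) as [d [Hd Hd']]. exists d. split; auto.
  intros y [_ Hy]. apply Hd'. apply Hy.
Qed.

Lemma unif_lim (F : nat -> R -> R) : (forall N, cont (F N)) ->
  (forall eps, 0 < eps -> exists M0, forall M N x, (M0 <= M)%nat -> (M <= N)%nat -> Rabs (F N x - F M x) <= eps) ->
  exists S, cont S /\ forall eps, 0 < eps -> exists M0, forall M x, (M0 <= M)%nat -> Rabs (S x - F M x) <= eps.
Proof.
  intros CF HU.
  assert (Hex : forall x, exists l : R, is_lim_seq (fun N => F N x) l).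
  { intros x. assert (ex_finite_lim_seq (fun N => F N x)).
    { apply ex_lim_seq_cauchy_corr. intros eps.
      destruct (HU (eps / 4)) as [M0 HM0]; [destruct eps; simpl; lra|].
      exists M0. intros n m Hn Hm.
      pose proof (HM0 M0 n x (le_n _) Hn). pose proof (HM0 M0 m x (le_n _) Hm).
      apply Rabs_le_inv' in H. apply Rabs_le_inv' in H0. destruct eps as [e He]; simpl in *.
      apply Rabs_def1; lra. }
    destruct H as [l Hl]. exists l; auto. }
  set (S := fun x => real (Lim_seq (fun N => F N x))).
  assert (HS : forall x, is_lim_seq (fun N => F N x) (S x)).
  { intros x. destruct (Hex x) as [l Hl]. unfold S. rewrite (is_lim_seq_unique _ _ Hl). simpl; exact Hl. }
  assert (Happ : forall eps, 0 < eps -> exists M0, forall M x, (M0 <= M)%nat -> Rabs (S x - F M x) <= eps).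
  { intros eps Heps. destruct (HU eps Heps) as [M0 HM0]. exists M0. intros M x HM.
    assert (L : is_lim_seq (fun N => Rabs (F N x - F M x)) (Rabs (S x - F M x))).
    { apply (is_lim_seq_abs _ (S x - F M x)). apply is_lim_seq_minus'. apply HS. apply is_lim_seq_const. }
    assert (Rbar_le (Rabs (S x - F M x)) eps).
    { apply (is_lim_seq_le_loc (fun N => Rabs (F N x - F M x)) (fun _ => eps) _ _); auto. exists M. intros n Hn. apply HM0; auto.
      apply is_lim_seq_const. }
    simpl in H. auto. }
  exists S. split; auto.
  apply cont_of_eps. intros x eps Heps.
  destruct (Happ (eps / 4)) as [M0 HM0]; [lra|].
  destruct (cont_eps (F M0) x (eps / 4) (CF M0)) as [d [Hd Hd']]; [lra|].
  exists d. split; auto. intros y Hy.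
  pose proof (HM0 M0 x (le_n _)). pose proof (HM0 M0 y (le_n _)). pose proof (Hd' y Hy).
  apply Rabs_le_inv' in H. apply Rabs_le_inv' in H0. apply Rabs_def2 in H1.
  apply Rabs_def1; lra.
Qed.

Lemma zero_of_small a c : (forall eps, 0 < eps -> Rabs a <= c * eps) -> 0 <= c -> a = 0.
Proof.
  intros H Hc. destruct (Req_dec a 0); auto. exfalso.
  assert (0 < Rabs a) by (apply Rabs_pos_lt; auto).
  specialize (H (Rabs a / (2 * (c + 1)))). 
  assert (0 < Rabs a / (2 * (c + 1))) by (apply Rdiv_lt_0_compat; lra).
  specialize (H H2).
  assert (c * (Rabs a / (2 * (c + 1))) < Rabs a).
  { replace (c * (Rabs a / (2 * (c + 1)))) with (Rabs a * (c / (2 * (c + 1)))) by (field; lra).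
    assert (c / (2 * (c + 1)) < 1). { apply Rmult_lt_reg_r with (2 * (c + 1)). lra. unfold Rdiv. rewrite Rmult_assoc, Rinv_l; lra. }
    nra. }
  lra.
Qed.

Lemma Ac_0 h : Ac h 0 = RInt h 0 (2 * PI).
Proof. unfold Ac. apply RI_ext. intros; simpl; rewrite Rmult_0_l, cos_0; ring. Qed.
Lemma Bc_0 h : Bc h 0 = 0.
Proof. unfold Bc. rewrite (RI_ext _ (fun _ => 0)). rewrite RI_const; ring. intros; simpl; rewrite Rmult_0_l, sin_0; ring. Qed.

Lemma SN_Ac h k M : RInt h 0 (2 * PI) = 0 -> (k <= M)%nat -> Ac (SN h M) k = Ac h k.
Proof.
  intros Hm HkM. unfold Ac at 1, SN. rewrite TS_cos. pose proof PI_RGT_0.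
  unfold inr. destruct k. simpl. rewrite Ac_0; auto.
  replace (Nat.leb 1 (S k)) with true by (symmetry; apply Nat.leb_le; lia).
  replace (Nat.leb (S k) M) with true by (symmetry; apply Nat.leb_le; lia). simpl. field. lra.
Qed.
Lemma SN_Bc h k M : (k <= M)%nat -> Bc (SN h M) k = Bc h k.
Proof.
  intros HkM. unfold Bc at 1, SN. rewrite TS_sin. pose proof PI_RGT_0.
  unfold inr. destruct k. simpl. rewrite Bc_0; auto.
  replace (Nat.leb 1 (S k)) with true by (symmetry; apply Nat.leb_le; lia).
  replace (Nat.leb (S k) M) with true by (symmetry; apply Nat.leb_le; lia). simpl. field. lra.
Qed.

Lemma cont_SN h N : cont (SN h N).
Proof. apply cont_TS. Qed.

Lemma parseval_C1 (phi phi' : R -> R) : (forall x, is_derive phi x (phi' x)) -> cont phi' ->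
  phi (2 * PI) = phi 0 -> RInt phi 0 (2 * PI) = 0 ->
  forall eta, 0 < eta -> exists N0, forall N, (N0 <= N)%nat ->
    RInt (fun x => (phi x - SN phi N x) ^ 2) 0 (2 * PI) <= eta.
Proof.
  intros Hd Cd Hp Hm eta Heta. pose proof PI_RGT_0 as Hpi.
  assert (Cp : cont phi) by (apply cont_of_derive; intros x; eexists; apply Hd).
  assert (DC := deriv_coef phi phi' Hd Cd Hp).
  set (K := PI * RInt (fun x => phi' x ^ 2) 0 (2 * PI)).
  assert (HB : forall N, sum_n_m (fun n => INR n ^ 2 * ((Ac phi n / PI) ^ 2 + (Bc phi n / PI) ^ 2)) 1 N <= K / PI ^ 2).
  { intros N. pose proof (bessel phi' N Cd). fold K in H.
    replace (sum_n_m (fun n => INR n ^ 2 * ((Ac phi n / PI) ^ 2 + (Bc phi n / PI) ^ 2)) 1 N)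
      with (/ PI ^ 2 * sum_n_m (wn phi') 1 N).
    unfold Rdiv. rewrite (Rmult_comm (/ PI ^ 2)). apply Rmult_le_compat_r. apply Rlt_le, Rinv_0_lt_compat, pow_lt; lra. auto.
    rewrite <- sum_scal_R. apply sum_ext_R. intros n. unfold wn. destruct (DC n) as [E1 E2]. rewrite E1, E2.
    field. lra. }
  assert (HU : forall eps, 0 < eps -> exists M0, forall M N x, (M0 <= M)%nat -> (M <= N)%nat ->
     Rabs (SN phi N x - SN phi M x) <= eps).
  { intros eps Heps. destruct (coef_tail _ _ _ HB eps Heps) as [M0 [_ HM0]].
    exists M0. intros M N x HM HMN. unfold SN. eapply Rle_trans. apply TS_diff; auto. apply HM0; auto. }
  destruct (unif_lim (SN phi) (cont_SN phi) HU) as [S [CS HS]].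
  assert (HAS : forall k, Ac S k = Ac phi k).
  { intros k. apply Rminus_diag_uniq. apply (zero_of_small _ (2 * PI)); [|lra].
    intros eps Heps. destruct (HS eps Heps) as [M0 HM0].
    rewrite <- (SN_Ac phi k (Nat.max M0 k) Hm) by lia.
    pose proof (cont_SN phi (Nat.max M0 k)). unfold Ac. rewrite <- RI_minus by cont_tac.
    replace (2 * PI * eps) with ((2 * PI - 0) * eps) by ring.
    apply RI_abs_le. lra. pose proof (cont_SN phi (Nat.max M0 k)). cont_tac.
    intros x _. replace (S x * cos (INR k * x) - SN phi (Nat.max M0 k) x * cos (INR k * x))
      with ((S x - SN phi (Nat.max M0 k) x) * cos (INR k * x)) by ring.
    rewrite Rabs_mult. pose proof (COS_bound (INR k * x)).
    assert (Rabs (cos (INR k * x)) <= 1) by (apply Rabs_le; lra).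
    pose proof (HM0 (Nat.max M0 k) x ltac:(lia)).
    pose proof (Rabs_pos (cos (INR k * x))). pose proof (Rabs_pos (S x - SN phi (Nat.max M0 k) x)).
    nra. }
  assert (HBS : forall k, Bc S k = Bc phi k).
  { intros k. apply Rminus_diag_uniq. apply (zero_of_small _ (2 * PI)); [|lra].
    intros eps Heps. destruct (HS eps Heps) as [M0 HM0].
    rewrite <- (SN_Bc phi k (Nat.max M0 k)) by lia.
    pose proof (cont_SN phi (Nat.max M0 k)). unfold Bc. rewrite <- RI_minus by cont_tac.
    replace (2 * PI * eps) with ((2 * PI - 0) * eps) by ring.
    apply RI_abs_le. lra. pose proof (cont_SN phi (Nat.max M0 k)). cont_tac.
    intros x _. replace (S x * sin (INR k * x) - SN phi (Nat.max M0 k) x * sin (INR k * x))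
      with ((S x - SN phi (Nat.max M0 k) x) * sin (INR k * x)) by ring.
    rewrite Rabs_mult. pose proof (SIN_bound (INR k * x)).
    assert (Rabs (sin (INR k * x)) <= 1) by (apply Rabs_le; lra).
    pose proof (HM0 (Nat.max M0 k) x ltac:(lia)).
    pose proof (Rabs_pos (sin (INR k * x))). pose proof (Rabs_pos (S x - SN phi (Nat.max M0 k) x)).
    nra. }
  assert (Heq : forall x, 0 <= x <= 2 * PI -> phi x - S x = 0).
  { apply uniq. cont_tac.
    - intros k. unfold Ac. rewrite (RI_ext _ (fun t => phi t * cos (INR k * t) - S t * cos (INR k * t))) by (intros; ring).
      rewrite RI_minus by cont_tac. fold (Ac phi k) (Ac S k). rewrite HAS. ring.
    - intros k. unfold Bc. rewrite (RI_ext _ (fun t => phi t * sin (INR k * t) - S t * sin (INR k * t))) by (intros; ring).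
      rewrite RI_minus by cont_tac. fold (Bc phi k) (Bc S k). rewrite HBS. ring. }
  set (eps := Rmin 1 (eta / (2 * PI))).
  assert (He : 0 < eps /\ eps <= 1 /\ eps <= eta / (2 * PI)).
  { unfold eps. pose proof (Rmin_l 1 (eta / (2 * PI))). pose proof (Rmin_r 1 (eta / (2 * PI))).
    assert (0 < Rmin 1 (eta / (2 * PI))). { apply Rmin_glb_lt. lra. apply Rdiv_lt_0_compat; lra. }
    lra. }
  destruct He as [He0 [He1 He2]].
  destruct (HS eps He0) as [M0 HM0]. exists M0. intros N HN.
  apply Rle_trans with (RInt (fun _ => eps ^ 2) 0 (2 * PI)).
  - apply RI_le. lra. pose proof (cont_SN phi N). cont_tac. apply cont_const.
    intros x Hx. specialize (Heq x Hx). replace (phi x) with (S x) by lra.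
    pose proof (HM0 N x HN). apply pow_maj_Rabs. auto.
  - rewrite RI_const.
    assert (eps ^ 2 <= eps) by nra.
    assert (2 * PI * eps <= eta).
    { replace eta with (2 * PI * (eta / (2 * PI))) by (field; lra). apply Rmult_le_compat_l; lra. }
    nra.
Qed.

Fixpoint fsum (F : nat -> R) (n : nat) : R :=
  match n with O => 0 | S n' => fsum F n' + F n' end.

Lemma fsum_ext (F G : nat -> R) n : (forall k, (k < n)%nat -> F k = G k) -> fsum F n = fsum G n.
Proof. induction n; simpl; intros; auto. rewrite IHn, H; auto. Qed.
Lemma fsum_plus (F G : nat -> R) n : fsum (fun k => F k + G k) n = fsum F n + fsum G n.
Proof. induction n; simpl; auto. ring. rewrite IHn; ring. Qed.
Lemma fsum_minus (F G : nat -> R) n : fsum (fun k => F k - G k) n = fsum F n - fsum G n.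
Proof. induction n; simpl; auto. ring. rewrite IHn; ring. Qed.
Lemma fsum_scal c (F : nat -> R) n : fsum (fun k => c * F k) n = c * fsum F n.
Proof. induction n; simpl; auto. ring. rewrite IHn; ring. Qed.
Lemma fsum_shift (F : nat -> R) n : fsum F (S n) = F 0%nat + fsum (fun k => F (S k)) n.
Proof. induction n. simpl; ring. change (fsum F (S (S n))) with (fsum F (S n) + F (S n)). rewrite IHn. simpl. ring. Qed.
Lemma sum_n_m_fsum (F : nat -> R) m : sum_n_m F 0 m = fsum F (S m) :> R.
Proof. induction m. rewrite sum_n_n. simpl; ring. rewrite sum_Sm_R by lia. rewrite IHm. reflexivity. Qed.
Lemma fsum_exch (G : nat -> nat -> R) M N :
  fsum (fun k => sum_n_m (G k) 1 N) M = sum_n_m (fun n => fsum (fun k => G k n) M) 1 N :> R.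
Proof.
  induction M; simpl.
  - symmetry. destruct N. apply sum_zero_R; lia.
    rewrite (sum_ext_R _ (fun n => 0 * 0)) by (intros; ring). rewrite sum_scal_R. ring.
  - rewrite IHM. rewrite <- sum_plus_R. reflexivity.
Qed.
Lemma fsum_le (F G : nat -> R) n : (forall k, (k < n)%nat -> F k <= G k) -> fsum F n <= fsum G n.
Proof. induction n; simpl; intros. lra. apply Rplus_le_compat; auto. Qed.

Fixpoint Qv (m : nat) (x : R) : R :=
  match m with O => 1 | S m' => Qv m' x * (x - INR (S m' * S m')) end.

Lemma Qv_pos m n : (m < n)%nat -> 0 < Qv m (INR n ^ 2).
Proof.
  induction m; cbn [Qv]; intros. lra.
  apply Rmult_lt_0_compat. apply IHm; lia.
  rewrite mult_INR. assert (INR (S m) < INR n) by (apply lt_INR; lia).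
  pose proof (pos_INR (S m)). nra.
Qed.
Lemma Qv_zero m n : (1 <= n)%nat -> (n <= m)%nat -> Qv m (INR n ^ 2) = 0.
Proof.
  induction m; cbn [Qv]; intros. lia.
  destruct (Nat.eq_dec n (S m)) as [->|Hne].
  - rewrite mult_INR. ring.
  - rewrite IHm by lia. ring.
Qed.
Lemma Qv_nonneg m n : (1 <= n)%nat -> 0 <= Qv m (INR n ^ 2).
Proof. intros. destruct (le_lt_dec n m). rewrite Qv_zero; auto; lra. left; apply Qv_pos; auto. Qed.

Lemma finite_parseval h N : cont h -> RInt h 0 (2 * PI) = 0 ->
  (forall n, (N < n)%nat -> Ac h n = 0 /\ Bc h n = 0) ->
  RInt (fun x => h x ^ 2) 0 (2 * PI) = sum_n_m (wn h) 1 N / PI :> R.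
Proof.
  intros Ch Hm Hc. pose proof PI_RGT_0.
  assert (CS := cont_SN h N).
  assert (Z : forall x, 0 <= x <= 2 * PI -> h x - SN h N x = 0).
  { apply uniq. cont_tac.
    - intros k. unfold Ac. rewrite (RI_ext _ (fun t => h t * cos (INR k * t) - SN h N t * cos (INR k * t))) by (intros; ring).
      rewrite RI_minus by cont_tac. fold (Ac h k) (Ac (SN h N) k).
      destruct (le_lt_dec k N). rewrite SN_Ac; auto; ring.
      unfold Ac at 2, SN. rewrite TS_cos. unfold inr.
      replace (Nat.leb k N) with false by (symmetry; apply Nat.leb_gt; lia).
      rewrite Bool.andb_false_r. destruct (Hc k l) as [-> _]. ring.
    - intros k. unfold Bc. rewrite (RI_ext _ (fun t => h t * sin (INR k * t) - SN h N t * sin (INR k * t))) by (intros; ring).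
      rewrite RI_minus by cont_tac. fold (Bc h k) (Bc (SN h N) k).
      destruct (le_lt_dec k N). rewrite SN_Bc; auto; ring.
      unfold Bc at 2, SN. rewrite TS_sin. unfold inr.
      replace (Nat.leb k N) with false by (symmetry; apply Nat.leb_gt; lia).
      rewrite Bool.andb_false_r. destruct (Hc k l) as [_ ->]. ring. }
  assert (E : RInt (fun x => (h x - SN h N x) ^ 2) 0 (2 * PI) = 0 :> R).
  { rewrite (RInt_ext _ (fun _ => 0)). rewrite RI_const; ring.
    intros x Hx. rewrite Rmin_left in Hx by lra. rewrite Rmax_right in Hx by lra.
    rewrite Z by lra. apply (pow_i 2). lia. }
  rewrite bessel_id in E; auto. lra.
Qed.

Lemma periodic_int (g : R -> R) : (forall t, g (t + 2 * PI) = g t) ->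
  forall y (z : Z), g (y + IZR z * (2 * PI)) = g y.
Proof.
  intros Hg y z.
  assert (Hn : forall n, g (y + INR n * (2 * PI)) = g y).
  { induction n. simpl. rewrite Rmult_0_l, Rplus_0_r; auto.
    rewrite S_INR. replace (y + (INR n + 1) * (2 * PI)) with ((y + INR n * (2 * PI)) + 2 * PI) by ring.
    rewrite Hg; auto. }
  assert (Hn' : forall n, g (y - INR n * (2 * PI)) = g y).
  { induction n. simpl. rewrite Rmult_0_l, Rminus_0_r; auto.
    rewrite <- IHn. rewrite S_INR. rewrite <- (Hg (y - (INR n + 1) * (2 * PI))). f_equal. ring. }
  destruct z. simpl. rewrite Rmult_0_l, Rplus_0_r; auto.
  rewrite <- positive_nat_Z, <- INR_IZR_INZ. apply Hn.
  rewrite <- Pos2Z.opp_pos, <- positive_nat_Z, opp_IZR, <- INR_IZR_INZ.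
  replace (y + - INR (Pos.to_nat p) * (2 * PI)) with (y - INR (Pos.to_nat p) * (2 * PI)) by ring. apply Hn'.
Qed.

Lemma reduce_2PI t : exists (z : Z) y, 0 <= y <= 2 * PI /\ t = y + IZR z * (2 * PI).
Proof.
  pose proof PI_RGT_0. destruct (archimed (t / (2 * PI))) as [H1 H2].
  exists (up (t / (2 * PI)) - 1)%Z. exists (t - IZR (up (t / (2 * PI)) - 1) * (2 * PI)).
  split; [|ring]. rewrite minus_IZR. simpl.
  set (u := IZR (up (t / (2 * PI)))) in *.
  assert (t = (t / (2 * PI)) * (2 * PI)) by (field; lra).
  split; nra.
Qed.

Lemma periodic_eq (g h : R -> R) : (forall t, g (t + 2 * PI) = g t) -> (forall t, h (t + 2 * PI) = h t) ->
  (forall y, 0 <= y <= 2 * PI -> g y = h y) -> forall t, g t = h t.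
Proof.
  intros Hg Hh E t. destruct (reduce_2PI t) as [z [y [Hy ->]]].
  rewrite periodic_int, (periodic_int h); auto.
Qed.

Lemma TS_periodic al be N t : TS al be N (t + 2 * PI) = TS al be N t.
Proof.
  unfold TS. apply sum_ext_R. intros n.
  replace (INR n * (t + 2 * PI)) with (INR n * t + 2 * INR n * PI) by ring.
  rewrite cos_period, sin_period. reflexivity.
Qed.

Lemma proj_eq h N : cont h -> RInt h 0 (2 * PI) = 0 ->
  (forall n, (N < n)%nat -> Ac h n = 0 /\ Bc h n = 0) ->
  forall x, 0 <= x <= 2 * PI -> h x - SN h N x = 0.
Proof.
  intros Ch Hm Hc. pose proof PI_RGT_0.
  assert (CS := cont_SN h N).
  apply uniq. cont_tac.
  - intros k. unfold Ac. rewrite (RI_ext _ (fun t => h t * cos (INR k * t) - SN h N t * cos (INR k * t))) by (intros; ring).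
    rewrite RI_minus by cont_tac. fold (Ac h k) (Ac (SN h N) k).
    destruct (le_lt_dec k N). rewrite SN_Ac; auto; ring.
    unfold Ac at 2, SN. rewrite TS_cos. unfold inr.
    replace (Nat.leb k N) with false by (symmetry; apply Nat.leb_gt; lia).
    rewrite Bool.andb_false_r. destruct (Hc k l) as [-> _]. ring.
  - intros k. unfold Bc. rewrite (RI_ext _ (fun t => h t * sin (INR k * t) - SN h N t * sin (INR k * t))) by (intros; ring).
    rewrite RI_minus by cont_tac. fold (Bc h k) (Bc (SN h N) k).
    destruct (le_lt_dec k N). rewrite SN_Bc; auto; ring.
    unfold Bc at 2, SN. rewrite TS_sin. unfold inr.
    replace (Nat.leb k N) with false by (symmetry; apply Nat.leb_gt; lia).
    rewrite Bool.andb_false_r. destruct (Hc k l) as [_ ->]. ring.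
Qed.

Lemma sum_nonneg1 (a : nat -> R) N : (forall n, (1 <= n)%nat -> 0 <= a n) -> 0 <= sum_n_m a 1 N.
Proof.
  intros H. induction N. rewrite sum_zero_R by lia. lra.
  rewrite sum_Sm_R by lia. pose proof (H (S N) ltac:(lia)). lra.
Qed.
Lemma sum_ge_term1 (a : nat -> R) N n0 : (forall n, (1 <= n)%nat -> 0 <= a n) -> (1 <= n0 <= N)%nat ->
  a n0 <= sum_n_m a 1 N.
Proof.
  intros H Hn. induction N. lia.
  rewrite sum_Sm_R by lia. destruct (Nat.eq_dec n0 (S N)) as [->|Hne].
  - pose proof (sum_nonneg1 a N H). lra.
  - pose proof (H (S N) ltac:(lia)). assert (a n0 <= sum_n_m a 1 N) by (apply IHN; lia). lra.
Qed.

Lemma fsum_lim (a : nat -> nat -> R) (l : nat -> R) n :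
  (forall k, (k < n)%nat -> is_lim_seq (a k) (l k)) ->
  is_lim_seq (fun N => fsum (fun k => a k N) n) (fsum l n).
Proof.
  induction n; intros H; simpl.
  - apply is_lim_seq_const.
  - apply is_lim_seq_plus'. apply IHn; intros; apply H; lia. apply H; lia.
Qed.

Lemma mul_div_cancel (a c : R) : c <> 0 -> c * (a * / c) = a.
Proof. intros; field; auto. Qed.

Lemma leq_of_le k m : (k <= m)%nat -> is_true (ssrnat.leq k m).
Proof. intros H. destruct (@ssrnat.leP k m); [reflexivity|contradiction]. Qed.

Section MainA.
Variables (m : nat) (f : R -> R).
Hypothesis Hf : Cm m f.
Hypothesis Hper : forall t, f (t + 2 * PI) = f t.
Hypothesis Hmean : RInt f 0 (2 * PI) = 0.

Let D k := Derive_n f k.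

Lemma D_cont k : (k <= m)%nat -> cont (D k).
Proof. intros Hk x. apply (proj2 Hf k x (leq_of_le _ _ Hk)). Qed.
Lemma D_der k : (k < m)%nat -> forall x, is_derive (D k) x (D (S k) x).
Proof. intros Hk x. apply Derive_correct. apply (proj1 Hf k x (leq_of_le _ _ Hk)). Qed.
Lemma D_per k t : D k (t + 2 * PI) = D k t.
Proof. unfold D. rewrite <- Derive_n_comp_trans. apply Derive_n_ext. intros; apply Hper. Qed.
Lemma D_per0 k : D k (2 * PI) = D k 0.
Proof. replace (2 * PI) with (0 + 2 * PI) at 1 by ring. apply D_per. Qed.
Lemma D_mean k : (k <= m)%nat -> RInt (D k) 0 (2 * PI) = 0 :> R.
Proof.
  destruct k; intros Hk.
  - exact Hmean.
  - rewrite (RI_deriv (D k) (D (S k))). rewrite D_per0. ring.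
    apply D_der; lia. apply D_cont; auto.
Qed.
Lemma D_wn k n : (k <= m)%nat -> wn (D k) n = (INR n ^ 2) ^ k * wn f n.
Proof.
  induction k; intros Hk.
  - simpl. rewrite Rmult_1_l. reflexivity.
  - destruct (deriv_coef (D k) (D (S k)) (D_der k ltac:(lia)) (D_cont (S k) Hk) (D_per0 k) n) as [E1 E2].
    replace ((INR n ^ 2) ^ S k * wn f n) with (INR n ^ 2 * ((INR n ^ 2) ^ k * wn f n)) by (simpl; ring).
    rewrite <- IHk by lia. unfold wn. rewrite E1, E2. ring.
Qed.

Let I k := RInt (fun t => D k t ^ 2) 0 (2 * PI).
Let P k N := sum_n_m (fun n => (INR n ^ 2) ^ k * wn f n) 1 N / PI.

Lemma P_wn k N : (k <= m)%nat -> P k N = sum_n_m (wn (D k)) 1 N / PI.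
Proof. intros. unfold P. f_equal. apply sum_ext_R. intros n. rewrite D_wn; auto. Qed.

Lemma P_lim k : (k < m)%nat -> is_lim_seq (P k) (I k).
Proof.
  intros Hk. apply is_lim_seq_spec. intros eps.
  destruct (parseval_C1 (D k) (D (S k)) (D_der k Hk) (D_cont (S k) Hk) (D_per0 k) (D_mean k ltac:(lia)) (eps / 2)) as [N0 HN0].
  destruct eps; simpl; lra.
  exists N0. intros N HN. specialize (HN0 N HN).
  rewrite bessel_id in HN0 by (apply D_cont; lia).
  assert (0 <= RInt (fun x => (D k x - SN (D k) N x) ^ 2) 0 (2 * PI)).
  { apply RI_ge0. pose proof PI_RGT_0; lra. pose proof (cont_SN (D k) N). pose proof (D_cont k ltac:(lia)). cont_tac.
    intros; apply pow2_ge_0. }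
  rewrite bessel_id in H by (apply D_cont; lia).
  rewrite P_wn by lia. fold (I k) in *. apply Rabs_def1; destruct eps; simpl in *; lra.
Qed.

Lemma P_bessel N : P m N <= I m.
Proof.
  rewrite P_wn by lia. pose proof (bessel (D m) N (D_cont m (le_n _))). fold (I m) in H.
  pose proof PI_RGT_0. unfold Rdiv. apply Rmult_le_reg_l with PI. lra.
  rewrite mul_div_cancel by lra. auto.
Qed.

Variable q : nat -> R.
Hypothesis Hq : forall x, fsum (fun k => q k * x ^ k) (S m) = Qv m x.
Hypothesis Hqm : q m = 1.

Lemma T_eq N : fsum (fun k => q k * P k N) (S m) = sum_n_m (fun n => Qv m (INR n ^ 2) * wn f n / PI) 1 N.
Proof.
  unfold P.
  rewrite (fsum_ext _ (fun k => sum_n_m (fun n => q k * ((INR n ^ 2) ^ k * wn f n) / PI) 1 N)).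
  2:{ intros k _. symmetry. rewrite (sum_ext_R _ (fun n => (q k / PI) * ((INR n ^ 2) ^ k * wn f n))) by (intros; unfold Rdiv; ring).
      rewrite sum_scal_R. unfold Rdiv. ring. }
  rewrite fsum_exch. apply sum_ext_R. intros n. rewrite <- Hq.
  transitivity (wn f n / PI * fsum (fun k => q k * (INR n ^ 2) ^ k) (S m)).
  rewrite <- fsum_scal. apply fsum_ext. intros; cbv beta; unfold Rdiv. generalize ((INR n ^ 2) ^ k); intros z; ring. generalize (fsum (fun k => q k * (INR n ^ 2) ^ k) (S m)); intros z; unfold Rdiv; ring.
Qed.

Lemma T_nonneg N : 0 <= fsum (fun k => q k * P k N) (S m).
Proof.
  rewrite T_eq. apply sum_nonneg1. intros n Hn. pose proof PI_RGT_0.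
  apply Rmult_le_pos. apply Rmult_le_pos. apply Qv_nonneg; auto.
  unfold wn; pose proof (pow2_ge_0 (Ac f n)); pose proof (pow2_ge_0 (Bc f n)); lra.
  apply Rlt_le, Rinv_0_lt_compat; lra.
Qed.

Let QA := fsum (fun k => q k * I k) (S m).
Let L := fsum (fun k => q k * I k) m.
Let LN N := fsum (fun k => q k * P k N) m.

Lemma LN_lim : is_lim_seq LN L.
Proof.
  unfold LN, L. apply (fsum_lim (fun k N => q k * P k N)). intros k Hk.
  assert (H := is_lim_seq_scal_l (P k) (q k) (I k) (P_lim k Hk)). simpl in H. exact H.
Qed.

Lemma QA_ge N : QA >= (L - LN N) + fsum (fun k => q k * P k N) (S m).
Proof.
  unfold QA, L, LN. simpl. rewrite Hqm. pose proof (P_bessel N). lra.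
Qed.

Lemma QA_nonneg : 0 <= QA.
Proof.
  destruct (Rle_lt_dec 0 QA) as [H|H]; auto. exfalso.
  assert (HL := LN_lim). apply is_lim_seq_spec in HL.
  destruct (HL (mkposreal (- QA) ltac:(lra))) as [N HN]. specialize (HN N (le_n _)). simpl in HN.
  pose proof (QA_ge N). pose proof (T_nonneg N). apply Rabs_def2 in HN. lra.
Qed.

Lemma QA_zero_coef : QA = 0 -> forall n, (m < n)%nat -> Ac f n = 0 /\ Bc f n = 0.
Proof.
  intros HQ n0 Hn0. pose proof PI_RGT_0.
  set (c := Qv m (INR n0 ^ 2) * wn f n0 / PI).
  assert (Hw0 : 0 <= wn f n0) by (unfold wn; pose proof (pow2_ge_0 (Ac f n0)); pose proof (pow2_ge_0 (Bc f n0)); lra).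
  assert (Hqv := Qv_pos m n0 Hn0).
  assert (Hc0 : 0 <= c) by (unfold c; apply Rmult_le_pos; [nra|]; apply Rlt_le, Rinv_0_lt_compat; lra).
  assert (Hle : forall N, (n0 <= N)%nat -> c <= LN N - L).
  { intros N HN. pose proof (QA_ge N). rewrite T_eq in H0.
    assert (c <= sum_n_m (fun n => Qv m (INR n ^ 2) * wn f n / PI) 1 N).
    { apply (sum_ge_term1 (fun n => Qv m (INR n ^ 2) * wn f n / PI)); [|lia].
      intros n Hn. apply Rmult_le_pos. apply Rmult_le_pos. apply Qv_nonneg; auto.
      unfold wn; pose proof (pow2_ge_0 (Ac f n)); pose proof (pow2_ge_0 (Bc f n)); lra.
      apply Rlt_le, Rinv_0_lt_compat; lra. }
    lra. }
  assert (Hc : c = 0).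
  { destruct Hc0 as [Hc0|Hc0]; auto. exfalso.
    assert (HL := LN_lim). apply is_lim_seq_spec in HL.
    destruct (HL (mkposreal c Hc0)) as [N HN]. specialize (HN (N + n0)%nat ltac:(lia)). simpl in HN.
    specialize (Hle (N + n0)%nat ltac:(lia)). apply Rabs_def2 in HN. lra. }
  assert (wn f n0 = 0).
  { unfold c in Hc. unfold Rdiv in Hc. apply Rmult_integral in Hc. destruct Hc as [Hc|Hc].
    apply Rmult_integral in Hc. destruct Hc; auto; lra. exfalso. revert Hc. apply Rinv_neq_0_compat; lra. }
  unfold wn in H0. apply Rplus_sqr_eq_0. unfold Rsqr. simpl in H0. lra.
Qed.

Lemma QA_zero_iff : QA = 0 <-> trig_poly_1_m m f.
Proof.
  pose proof PI_RGT_0. split.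
  - intros HQ. assert (Hc := QA_zero_coef HQ).
    assert (E : forall x, 0 <= x <= 2 * PI -> f x - SN f m x = 0).
    { apply proj_eq; auto. apply (D_cont 0); lia. }
    exists (fun n => Ac f n / PI), (fun n => Bc f n / PI).
    apply (periodic_eq f (SN f m)); auto.
    intros t. unfold SN. apply TS_periodic.
    intros y Hy. specialize (E y Hy). lra.
  - intros [a [b Hab]].
    assert (Hc : forall n, (m < n)%nat -> Ac f n = 0 /\ Bc f n = 0).
    { intros n Hn. unfold Ac, Bc. split.
      - rewrite (RI_ext _ (fun t => TS a b m t * cos (INR n * t))) by (intros; rewrite Hab; reflexivity).
        rewrite TS_cos. unfold inr. replace (Nat.leb n m) with false by (symmetry; apply Nat.leb_gt; lia).
        rewrite Bool.andb_false_r. reflexivity.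
      - rewrite (RI_ext _ (fun t => TS a b m t * sin (INR n * t))) by (intros; rewrite Hab; reflexivity).
        rewrite TS_sin. unfold inr. replace (Nat.leb n m) with false by (symmetry; apply Nat.leb_gt; lia).
        rewrite Bool.andb_false_r. reflexivity. }
    assert (HI : forall k, (k < S m)%nat -> I k = P k m).
    { intros k Hk. unfold I. rewrite finite_parseval with (N := m).
      rewrite P_wn by lia. reflexivity. apply D_cont; lia. apply D_mean; lia.
      intros n Hn. pose proof (D_wn k n ltac:(lia)). destruct (Hc n Hn) as [HA HB].
      unfold wn in H0 at 2. rewrite HA, HB in H0. unfold wn in H0.
      apply Rplus_sqr_eq_0. unfold Rsqr. simpl in H0. lra. }
    unfold QA. rewrite (fsum_ext _ (fun k => q k * P k m)) by (intros; rewrite HI; auto).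
    rewrite T_eq. rewrite (sum_n_m_ext_loc _ (fun _ => 0 * 0)).
    rewrite sum_scal_R. ring.
    intros n Hn. rewrite Qv_zero by lia. simpl. unfold Rdiv. ring.
Qed.

End MainA.

Module PolyFacts.
From mathcomp Require Import all_boot all_algebra Rstruct.
Import GRing.Theory Num.Theory.
Local Open Scope ring_scope.

Lemma fsum_big (F : nat -> R) n : fsum F n = \sum_(i < n) F i.
Proof. elim: n => [|n IH] /=; first by rewrite big_ord0. by rewrite big_ord_recr /= IH. Qed.

Lemma Qpoly_horner m x : (Qpoly m).[x] = Qv m x.
Proof.
  elim: m => [|m IH]; first by rewrite /Qpoly big_geq // hornerE.
  have -> : Qv m.+1 x = (Qv m x * (x - INR (m.+1 * m.+1)))%R by [].
  rewrite /Qpoly big_nat_recr // hornerM -/(Qpoly m) IH hornerXsubC.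
  by rewrite INRE.
Qed.

Lemma size_Qpoly m : size (Qpoly m) = m.+1.
Proof. by rewrite /Qpoly size_prod_XsubC size_iota subn1. Qed.

Lemma cQ_horner m (x : R) : fsum (fun k => Rmult (cQ m k) (pow x k)) (S m) = Qv m x.
Proof.
  rewrite -Qpoly_horner horner_coef size_Qpoly fsum_big.
  by apply: eq_bigr => i _; rewrite /cQ RpowE.
Qed.

Lemma cQ_top m : cQ m m = 1.
Proof.
  have := monic_prod_XsubC (index_iota 1 m.+1) xpredT (fun j : nat => ((j * j)%N%:R : R)).
  rewrite -/(Qpoly m) => /monicP; rewrite lead_coefE size_Qpoly /=.
  by rewrite /cQ.
Qed.

Lemma XsubC1 : ('X - 1 : {poly R}) = 'X - (1 : R)%:P.
Proof. by rewrite polyC1. Qed.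

Lemma Q_XP m : (1 <= m)%N -> Qpoly m = ('X - 1) * Ppoly m.
Proof.
  move=> Hm. rewrite /Qpoly big_ltn ?ltnS // -/(Ppoly m).
Qed.

Lemma size_Ppoly m : (1 <= m)%N -> size (Ppoly m) = m.
Proof. move=> Hm. rewrite /Ppoly size_prod_XsubC size_iota. by rewrite subSS subn1 prednK. Qed.

Lemma cQ_lam m k : (1 <= m)%N -> cQ m k = Rminus (match k with 0%N => 0 | S j => lam m j end) (lam m k).
Proof.
  move=> Hm. rewrite /cQ /lam Q_XP // mulrBl mul1r coefB coefXM.
  by case: k.
Qed.

Lemma lam_top m : (1 <= m)%N -> lam m m = 0.
Proof. move=> Hm. by rewrite /lam nth_default // size_Ppoly. Qed.

Lemma Ppoly_at1 m : (Ppoly m).[1] = prod_1_minus_sq m.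
Proof.
  rewrite /Ppoly horner_prod /prod_1_minus_sq. apply: eq_bigr => j _. by rewrite hornerXsubC.
Qed.

Lemma P_XS m : Ppoly m = Spoly m * ('X - 1) + (prod_1_minus_sq m)%:P.
Proof.
  rewrite /Spoly divpK. by rewrite -Ppoly_at1 subrK.
  rewrite XsubC1 dvdp_XsubCl rootE !hornerE. by rewrite subrr.
Qed.

Definition sg m j := (Spoly m)`_j.

Lemma lam_S m k : lam m k = Rplus (Rminus (match k with 0%N => 0 | S j => sg m j end) (sg m k))
   (match k with 0%N => prod_1_minus_sq m | S _ => 0 end).
Proof.
  rewrite /lam /sg {1}P_XS coefD mulrBr mulr1 coefB coefMX coefC.
  by case: k.
Qed.

Lemma S_top m j : (2 <= m)%N -> (m - 1 <= j)%N -> sg m j = 0.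
Proof.
  move=> Hm Hj. rewrite /sg nth_default //. apply: leq_trans Hj.
  rewrite /Spoly size_divp; last by rewrite XsubC1 monic_neq0 // monicXsubC.
  rewrite XsubC1 size_XsubC /=. rewrite leq_sub2r //.
  apply: leq_trans (size_polyD _ _) _. rewrite size_polyN size_Ppoly; last by apply: leq_trans Hm.
  rewrite geq_max leqnn /=. apply: leq_trans (size_polyC_leq1 _) _. by apply: leq_trans Hm.
Qed.
End PolyFacts.

Lemma subn_coq a b : ssrnat.subn a b = Nat.sub a b.
Proof. reflexivity. Qed.

Lemma shift_sum (mu X : nat -> R) n : mu n = 0 ->
  fsum (fun k => (match k with O => 0 | S j => mu j end - mu k) * X k) (S n) =
  fsum (fun j => mu j * (X (S j) - X j)) n.
Proof.
  intros H.
  rewrite (fsum_ext _ (fun k => (match k with O => 0 | S j => mu j end) * X k - mu k * X k)) by (intros; ring).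
  rewrite fsum_minus, fsum_shift. simpl (fsum (fun k => mu k * X k) (S n)). rewrite H.
  rewrite (fsum_ext (fun j => mu j * (X (S j) - X j)) (fun j => mu j * X (S j) - mu j * X j)) by (intros; ring).
  rewrite fsum_minus. ring.
Qed.

Lemma sum1_fsum (F : nat -> R) n : sum_n_m F 1 n = fsum (fun i => F (S i)) n :> R.
Proof.
  induction n. rewrite sum_zero_R by lia. reflexivity.
  rewrite sum_Sm_R by lia. rewrite IHn. reflexivity.
Qed.

Lemma Dc m f : Cm m f -> forall k, (k <= m)%nat -> cont (Derive_n f k).
Proof. exact (D_cont m f). Qed.
Lemma Dd m f : Cm m f -> forall k, (k < m)%nat -> forall x, is_derive (Derive_n f k) x (Derive_n f (S k) x).
Proof. exact (D_der m f). Qed.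
Lemma Dp f : (forall t, f (t + 2 * PI) = f t) -> forall k, Derive_n f k (2 * PI) = Derive_n f k 0.
Proof. exact (D_per0 f). Qed.

Section Final.
Variables (m : nat) (f : R -> R).
Hypothesis Hf : Cm m f.
Hypothesis Hper : forall t, f (t + 2 * PI) = f t.
Hypothesis Hmean : RInt f 0 (2 * PI) = 0.

Let A k := RInt (fun t => Derive_n f k t ^ 2) 0 (2 * PI).

Lemma quantA_eq : quantA m f = fsum (fun k => cQ m k * A k) (S m).
Proof. unfold quantA. rewrite sum_n_m_fsum. reflexivity. Qed.

Lemma quantA_lam : (1 <= m)%nat -> quantA m f = fsum (fun j => lam m j * (A (S j) - A j)) m.
Proof.
  intros Hm. rewrite quantA_eq.
  rewrite (fsum_ext _ (fun k => (match k with O => 0 | S j => lam m j end - lam m k) * A k)).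
  apply shift_sum. apply PolyFacts.lam_top. apply leq_of_le; auto.
  intros k _. rewrite PolyFacts.cQ_lam. reflexivity. apply leq_of_le; auto.
Qed.

Lemma quantB_eq : (1 <= m)%nat -> quantB m f = quantA m f.
Proof.
  intros Hm. rewrite quantA_lam by auto. unfold quantB. rewrite subn_coq.
  rewrite sum_n_m_fsum. replace (S (m - 1)) with m by lia.
  apply fsum_ext. intros k Hk. f_equal. unfold A. apply RI_minus.
  apply cont_sq. apply (Dc m f Hf); auto. apply cont_sq. apply (Dc m f Hf); auto; lia.
Qed.

Lemma cross_term i : (S (S i) <= m)%nat ->
  RInt (fun t => (Derive_n f (S (S i)) t + Derive_n f i t) ^ 2) 0 (2 * PI) = A (S (S i)) - 2 * A (S i) + A i :> R.
Proof.
  intros Hi.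
  assert (C2 := Dc m f Hf (S (S i)) Hi). assert (C1 := Dc m f Hf (S i) ltac:(lia)).
  assert (C0 := Dc m f Hf i ltac:(lia)).
  rewrite (RI_ext _ (fun t => Derive_n f (S (S i)) t ^ 2 + (2 * (Derive_n f (S (S i)) t * Derive_n f i t) + Derive_n f i t ^ 2))) by (intros; ring).
  rewrite RI_plus, RI_plus, RI_scal by cont_tac.
  rewrite (RI_parts (Derive_n f (S i)) (Derive_n f (S (S i))) (Derive_n f i) (Derive_n f (S i))).
  rewrite !(Dp f Hper).
  unfold A. rewrite (RI_ext (fun x => Derive_n f (S i) x * Derive_n f (S i) x) (fun t => Derive_n f (S i) t ^ 2)) by (intros; ring).
  ring.
  apply (Dd m f Hf); auto; lia. apply (Dd m f Hf); auto; lia. auto. auto.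
Qed.

Lemma quantC_eq : (2 <= m)%nat -> quantC m f = quantA m f.
Proof.
  intros Hm. rewrite quantA_lam by lia. unfold quantC. rewrite subn_coq.
  set (B := fun j => A (S j) - A j).
  set (p1 := prod_1_minus_sq m).
  rewrite (fsum_ext _ (fun j => (match j with O => 0 | S i => PolyFacts.sg m i end - PolyFacts.sg m j) * B j
                              + (match j with O => p1 | S _ => 0 end) * B j)).
  2:{ intros j _. rewrite PolyFacts.lam_S. unfold B, p1. ring. }
  rewrite fsum_plus.
  replace m with (S (m - 1)) at 2 3 by lia.
  rewrite shift_sum. 2:{ apply PolyFacts.S_top; apply leq_of_le; rewrite ?subn_coq; lia. }
  rewrite fsum_shift. rewrite (fsum_ext (fun k => _ * B (S k)) (fun _ => 0 * 0)) by (intros; ring).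
  rewrite fsum_scal.
  rewrite sum1_fsum.
  rewrite (RI_ext (fun t => Derive f t ^ 2 - f t ^ 2) (fun t => Derive_n f 1 t ^ 2 - Derive_n f 0 t ^ 2)) by (intros; reflexivity).
  rewrite RI_minus. fold (A 1%nat) (A 0%nat).
  2:{ apply cont_sq. apply (Dc m f Hf); auto; lia. }
  2:{ apply cont_sq. apply (Dc m f Hf); auto; lia. }
  rewrite Rmult_0_l, Rplus_0_r. replace (B 0%nat) with (A 1%nat - A 0%nat) by reflexivity.
  rewrite Rplus_comm. f_equal.
  apply fsum_ext. intros i Hi. unfold Scoef. simpl Nat.pred.
  replace (ssrnat.subn (S i) 1) with i by (rewrite subn_coq; lia).
  rewrite cross_term by lia. unfold B, PolyFacts.sg. ring.
Qed.

End Final.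

Theorem proposition2p1 (m : nat) (f : R -> R)
  (Hf : Cm m f)
  (Hper : forall t, f (t + 2 * PI) = f t)
  (Hmean : RInt f 0 (2 * PI) = 0) :
  (* (a) *)
  (0 <= quantA m f /\ (quantA m f = 0 <-> trig_poly_1_m m f)) /\
  (* (b), meaningful for m >= 1 (P_m is defined only for m >= 1) *)
  ((1 <= m)%nat -> 0 <= quantB m f /\ (quantB m f = 0 <-> trig_poly_1_m m f)) /\
  (* (c) *)
  ((2 <= m)%nat -> 0 <= quantC m f /\ (quantC m f = 0 <-> trig_poly_1_m m f)) /\
  (* equivalence of the inequalities *)
  ((1 <= m)%nat -> (0 <= quantA m f <-> 0 <= quantB m f)) /\
  ((2 <= m)%nat -> (0 <= quantA m f <-> 0 <= quantC m f)).
Proof.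
  assert (HA0 : 0 <= quantA m f).
  { rewrite quantA_eq. exact (QA_nonneg m f Hf Hper Hmean (cQ m) (PolyFacts.cQ_horner m) (PolyFacts.cQ_top m)). }
  assert (HA1 : quantA m f = 0 <-> trig_poly_1_m m f).
  { rewrite quantA_eq. exact (QA_zero_iff m f Hf Hper Hmean (cQ m) (PolyFacts.cQ_horner m) (PolyFacts.cQ_top m)). }
  split; [split; auto|].
  split; [intros Hm; rewrite quantB_eq by auto; split; auto|].
  split; [intros Hm; rewrite quantC_eq by auto; split; auto|].
  split.
  - intros Hm; rewrite quantB_eq by auto; tauto.
  - intros Hm; rewrite quantC_eq by auto; tauto.
Qed.
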